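(* Let $q\in\mathbb{R}$ and define on $(0,\pi/2)$ \[ A(x)=(\sin x-x\cos x)^2\cos x,\quad B(x)=x(\sin x-x\cos x)\sin^2x,\quad C(x)=-(2x^2\cos x-x\sin x-\cos x\sin^2x), \] and $g_1(x)=\dfrac{qB(x)-C(x)}{A(x)}$. Then (i) if $q\ge1$, $g_1$ is increasing on $(0,\pi/2)$ and $3q-\frac85<g_1(x)<\infty$ if $q>1$, while $3q-\frac85<g_1(x)<\frac{\pi^2}{4}-1$ if $q=1$; (ii) if $q\le\frac{34}{35}$, $g_1$ is decreasing on $(0,\pi/2)$ and $-\infty<g_1(x)<3q-\frac85$. *)

(* Defs.v *)
From Stdlib Require Import Reals Lra.
Open Scope R_scope.

Definition A (x : R) : R := (sin x - x * cos x) ^ 2 * cos x.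
Definition B (x : R) : R := x * (sin x - x * cos x) * (sin x) ^ 2.
Definition C (x : R) : R := - (2 * x ^ 2 * cos x - x * sin x - cos x * (sin x) ^ 2).
Definition g1 (q x : R) : R := (q * B x - C x) / A x.

Definition in_I (x : R) : Prop := 0 < x < PI / 2.

Definition strictly_increasing_on_I (f : R -> R) : Prop :=
  forall x y, in_I x -> in_I y -> x < y -> f x < f y.
Definition strictly_decreasing_on_I (f : R -> R) : Prop :=
  forall x y, in_I x -> in_I y -> x < y -> f y < f x.

(* Main.v *)
Require Import Defs.
From Stdlib Require Import Reals Lra Lia Factorial.
Open Scope R_scope.

Definition SL (x:R) := x - x^3/6 + x^5/120 - x^7/5040 + x^9/362880 - x^11/39916800.
Definition SU (x:R) := SL x + x^13/6227020800.
Definition CL (x:R) := 1 - x^2/2 + x^4/24 - x^6/720 + x^8/40320 - x^10/3628800.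
Definition CU (x:R) := CL x + x^12/479001600.

Lemma pw_bnd t h n : 0 <= t <= h -> 0 <= t^n <= h^n.
Proof. intros [H1 H2]. split. apply pow_le; auto. apply pow_incr; auto. Qed.
Lemma mono_up i a b x s c S C : 0 <= x -> 0 <= s <= S -> 0 <= c <= C -> x^i*s^a*c^b <= x^i*S^a*C^b.
Proof. intros Hx Hs Hc. apply Rmult_le_compat.
 - apply Rmult_le_pos; apply pow_le; lra.
 - apply pow_le; lra.
 - apply Rmult_le_compat_l. apply pow_le; lra. apply pow_incr; lra.
 - apply pow_incr; lra. Qed.
Lemma mono_lo i a b x s c S C : 0 <= x -> 0 <= S <= s -> 0 <= C <= c -> x^i*S^a*C^b <= x^i*s^a*c^b.
Proof. intros Hx Hs Hc. apply mono_up; lra. Qed.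
Lemma mono_up2 i a b x s c X S C : 0 <= x <= X -> 0 <= s <= S -> 0 <= c <= C -> x^i*s^a*c^b <= X^i*S^a*C^b.
Proof. intros Hx Hs Hc. apply Rmult_le_compat.
 - apply Rmult_le_pos; apply pow_le; lra.
 - apply pow_le; lra.
 - apply Rmult_le_compat. apply pow_le; lra. apply pow_le; lra. apply pow_incr; lra. apply pow_incr; lra.
 - apply pow_incr; lra. Qed.
Lemma mono_lo2 i a b x s c X S C : 0 <= X <= x -> 0 <= S <= s -> 0 <= C <= c -> X^i*S^a*C^b <= x^i*s^a*c^b.
Proof. intros Hx Hs Hc. apply mono_up2; lra. Qed.
Lemma pow_tail n N0 X x : 0 <= x <= X -> (N0 <= n)%nat -> x^n <= X^(n-N0)*x^N0.
Proof. intros Hx Hn. replace n with ((n-N0)+N0)%nat at 1 by lia. rewrite pow_add.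
apply Rmult_le_compat_r. apply pow_le; lra. apply pow_incr; lra. Qed.
Lemma pow_tail2 n N0 X x c : 0 <= x <= X -> (N0 <= n)%nat -> X^(n-N0) = c -> x^n <= c*x^N0.
Proof. intros Hx Hn Hc. rewrite <- Hc. apply pow_tail; auto. Qed.

Lemma sin_approx5 x : sin_approx x 5 = SL x.
Proof. unfold sin_approx, sin_term, SL. cbn [sum_f_R0 Nat.mul Nat.add].
rewrite !fact_simpl, !mult_INR. simpl INR. simpl pow. field. Qed.
Lemma sin_approx6 x : sin_approx x 6 = SU x.
Proof. unfold sin_approx, sin_term, SU, SL. cbn [sum_f_R0 Nat.mul Nat.add].
rewrite !fact_simpl, !mult_INR. simpl INR. simpl pow. field. Qed.
Lemma cos_approx5 x : cos_approx x 5 = CL x.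
Proof. unfold cos_approx, cos_term, CL. cbn [sum_f_R0 Nat.mul Nat.add].
rewrite !fact_simpl, !mult_INR. simpl INR. simpl pow. field. Qed.
Lemma cos_approx6 x : cos_approx x 6 = CU x.
Proof. unfold cos_approx, cos_term, CU, CL. cbn [sum_f_R0 Nat.mul Nat.add].
rewrite !fact_simpl, !mult_INR. simpl INR. simpl pow. field. Qed.

Lemma sin_bnd x : 0 <= x -> x <= PI -> SL x <= sin x <= SU x.
Proof. intros H1 H2. pose proof (sin_bound x 2 H1 H2) as H.
 replace (2*2+1)%nat with 5%nat in H by reflexivity. replace (2*(2+1))%nat with 6%nat in H by reflexivity.
 rewrite sin_approx5, sin_approx6 in H. exact H. Qed.
Lemma cos_bnd x : -PI/2 <= x -> x <= PI/2 -> CL x <= cos x <= CU x.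
Proof. intros H1 H2. pose proof (cos_bound x 2 H1 H2) as H.
 replace (2*2+1)%nat with 5%nat in H by reflexivity. replace (2*(2+1))%nat with 6%nat in H by reflexivity.
 rewrite cos_approx5, cos_approx6 in H. exact H. Qed.

Definition SU8 (a:R) := a - a^3/6 + a^5/120 - a^7/5040 + a^9/362880 - a^11/39916800 + a^13/6227020800 - a^15/1307674368000 + a^17/355687428096000.
Lemma sin_approx8 x : sin_approx x 8 = SU8 x.
Proof. unfold sin_approx, sin_term, SU8. cbn [sum_f_R0 Nat.mul Nat.add].
rewrite !fact_simpl, !mult_INR. simpl INR. simpl pow. field. Qed.

Lemma PI_ub : PI <= 31416/10000.
Proof. destruct (Rle_lt_dec PI (31416/10000)) as [H|H]; auto. exfalso.
 pose proof (sin_ge_0 (31416/10000) ltac:(lra) ltac:(lra)) as H1.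
 pose proof (sin_bound (31416/10000) 3 ltac:(lra) ltac:(lra)) as [_ H2].
 replace (2*(3+1))%nat with 8%nat in H2 by reflexivity. rewrite sin_approx8 in H2.
 unfold SU8 in H2. lra. Qed.

Lemma PI2_lb : 313/200 < PI/2.
Proof. apply PI2_lower_bound. lra.
 pose proof PI2_3_2.
 replace (313/200) with (2*(313/400)) by lra. rewrite cos_2a_sin.
 pose proof (sin_bnd (313/400) ltac:(lra) ltac:(lra)) as [_ H1].
 pose proof (sin_ge_0 (313/400) ltac:(lra) ltac:(lra)) as H2.
 unfold SU, SL in H1. nra. Qed.

Lemma trig_facts x : 0 < x < PI/2 ->
  (SL x <= sin x <= SU x) /\ (CL x <= cos x <= CU x) /\ 0 < sin x /\ 0 < cos x /\ x < 15708/10000.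
Proof. intros Hx. pose proof PI_ub. pose proof PI_RGT_0.
 split. apply sin_bnd; lra.
 split. apply cos_bnd; lra.
 split. apply sin_gt_0; lra.
 split. apply cos_gt_0; lra.
 lra. Qed.

Definition q_SL (y:R) : R := (1) + (-1/6)*y^1 + (1/120)*y^2 + (-1/5040)*y^3 + (1/362880)*y^4 + (-1/39916800)*y^5.
Lemma q_SL_sign y : 0 <= y <= (15421329/6250000) -> 0 < q_SL y.
Proof. intros [H0 H1]. unfold q_SL.
{ assert (Ht: 0 <= y - (0) <= (15421329/6250000)) by lra.
  pose proof (pw_bnd _ _ 1 Ht).
  pose proof (pw_bnd _ _ 2 Ht).
  pose proof (pw_bnd _ _ 3 Ht).
  pose proof (pw_bnd _ _ 4 Ht).
  pose proof (pw_bnd _ _ 5 Ht).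
  lra. }
Qed.
Lemma SL_nonneg x : 0 <= x <= 15708/10000 -> 0 <= SL x.
Proof. intros Hx. assert (E: SL x = x * q_SL (x^2)) by (unfold SL, q_SL; field). rewrite E.
apply Rmult_le_pos. lra. left. apply q_SL_sign. split; nra. Qed.
Definition q_CL (y:R) : R := (1) + (-1/2)*y^1 + (1/24)*y^2 + (-1/720)*y^3 + (1/40320)*y^4 + (-1/3628800)*y^5.
Lemma q_CL_sign y : 0 <= y <= (97969/40000) -> 0 < q_CL y.
Proof. intros [H0 H1]. unfold q_CL.
destruct (Rle_lt_dec y (97969/80000)) as [Hy|Hy].
{ assert (Ht: 0 <= y - (0) <= (97969/80000)) by lra.
  pose proof (pw_bnd _ _ 1 Ht).
  pose proof (pw_bnd _ _ 2 Ht).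
  pose proof (pw_bnd _ _ 3 Ht).
  pose proof (pw_bnd _ _ 4 Ht).
  pose proof (pw_bnd _ _ 5 Ht).
  lra. }
assert (H0' : (97969/80000) <= y) by lra. clear H0 Hy. rename H0' into H0.
destruct (Rle_lt_dec y (293907/160000)) as [Hy|Hy].
{ assert (Ht: 0 <= y - (97969/80000) <= (97969/160000)) by lra.
  pose proof (pw_bnd _ _ 1 Ht).
  pose proof (pw_bnd _ _ 2 Ht).
  pose proof (pw_bnd _ _ 3 Ht).
  pose proof (pw_bnd _ _ 4 Ht).
  pose proof (pw_bnd _ _ 5 Ht).
  lra. }
assert (H0' : (293907/160000) <= y) by lra. clear H0 Hy. rename H0' into H0.
destruct (Rle_lt_dec y (685783/320000)) as [Hy|Hy].
{ assert (Ht: 0 <= y - (293907/160000) <= (97969/320000)) by lra.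
  pose proof (pw_bnd _ _ 1 Ht).
  pose proof (pw_bnd _ _ 2 Ht).
  pose proof (pw_bnd _ _ 3 Ht).
  pose proof (pw_bnd _ _ 4 Ht).
  pose proof (pw_bnd _ _ 5 Ht).
  lra. }
assert (H0' : (685783/320000) <= y) by lra. clear H0 Hy. rename H0' into H0.
{ assert (Ht: 0 <= y - (685783/320000) <= (97969/320000)) by lra.
  pose proof (pw_bnd _ _ 1 Ht).
  pose proof (pw_bnd _ _ 2 Ht).
  pose proof (pw_bnd _ _ 3 Ht).
  pose proof (pw_bnd _ _ 4 Ht).
  pose proof (pw_bnd _ _ 5 Ht).
  lra. }
Qed.
Lemma CL_nonneg x : 0 <= x <= 313/200 -> 0 <= CL x.
Proof. intros Hx. assert (E: CL x = q_CL (x^2)) by (unfold CL, q_CL; field). rewrite E.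
left. apply q_CL_sign. split; nra. Qed.

Definition p_Stx (x s c : R) : R := (1)*(x^0*s^1*c^0) + (-1)*(x^1*s^0*c^1).
Definition q_Stx (y:R) : R := (333333333333333/1000000000000000) + (-166666666666667/5000000000000000)*y^1 + (119047619047619/100000000000000000)*y^2 + (-13778659611993/625000000000000000)*y^3 + (250521083854417/1000000000000000000000)*y^4 + (-208767569878681/100000000000000000000000)*y^5.
Lemma q_Stx_sign y : 0 <= y <= (15421329/6250000) -> 0 < q_Stx y.
Proof. intros [H0 H1]. unfold q_Stx.
{ assert (Ht: 0 <= y - (0) <= (15421329/6250000)) by lra.
  pose proof (pw_bnd _ _ 1 Ht).
  pose proof (pw_bnd _ _ 2 Ht).
  pose proof (pw_bnd _ _ 3 Ht).
  pose proof (pw_bnd _ _ 4 Ht).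
  pose proof (pw_bnd _ _ 5 Ht).
  lra. }
Qed.
Lemma bnd_Stx x s c : 0 <= x <= (3927/2500) -> SL x <= s <= SU x -> CL x <= c <= CU x -> 0 <= s -> 0 <= c -> 0 <= SL x -> p_Stx x s c >= x^3 * q_Stx (x^2).
Proof. intros Hx Hs Hc Hs0 Hc0 HSL. unfold p_Stx, q_Stx.
pose proof (mono_lo 0 1 0 x s c (SL x) (c) ltac:(lra) ltac:(lra) ltac:(lra)).
assert (x^0*(SL x)^1*(c)^0 = (1)*x^1 + (-1/6)*x^3 + (1/120)*x^5 + (-1/5040)*x^7 + (1/362880)*x^9 + (-1/39916800)*x^11) by (unfold SU, SL, CU, CL; field).
pose proof (mono_up 1 0 1 x s c (s) (CU x) ltac:(lra) ltac:(lra) ltac:(lra)).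
assert (x^1*(s)^0*(CU x)^1 = (1)*x^1 + (-1/2)*x^3 + (1/24)*x^5 + (-1/720)*x^7 + (1/40320)*x^9 + (-1/3628800)*x^11 + (1/479001600)*x^13) by (unfold SU, SL, CU, CL; field).
pose proof (pow_le x 1 ltac:(lra)).
pose proof (pow_le x 2 ltac:(lra)).
pose proof (pow_le x 3 ltac:(lra)).
pose proof (pow_le x 4 ltac:(lra)).
pose proof (pow_le x 5 ltac:(lra)).
pose proof (pow_le x 6 ltac:(lra)).
pose proof (pow_le x 7 ltac:(lra)).
pose proof (pow_le x 8 ltac:(lra)).
pose proof (pow_le x 9 ltac:(lra)).
pose proof (pow_le x 10 ltac:(lra)).
pose proof (pow_le x 11 ltac:(lra)).
pose proof (pow_le x 12 ltac:(lra)).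
pose proof (pow_le x 13 ltac:(lra)).
lra. Qed.
Lemma mach_Stx x : 0 < x <= (3927/2500) -> x < PI/2 -> 0 < p_Stx x (sin x) (cos x).
Proof. intros Hx Hx2. destruct (trig_facts x ltac:(lra)) as (Hs & Hc & Hs0 & Hc0 & Hxb).
pose proof (SL_nonneg x ltac:(lra)) as HSL.
pose proof (bnd_Stx x (sin x) (cos x) ltac:(lra) Hs Hc ltac:(lra) ltac:(lra) HSL) as Hb.
pose proof (q_Stx_sign (x^2) ltac:(split; nra)) as Hq.
pose proof (pow_lt x 3 ltac:(lra)) as Hm.
pose proof (Rmult_lt_0_compat _ _ Hm Hq). lra. Qed.

Definition p_PhiE (x s c : R) : R := (1)*(x^0*s^2*c^1) + (1)*(x^1*s^1*c^2) + (1)*(x^1*s^3*c^0) + (-2)*(x^2*s^0*c^3) + (-2)*(x^2*s^2*c^1).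
Definition q_PhiE (y:R) : R := (177777777777777/1000000000000000) + (-380952380952381/10000000000000000)*y^1 + (201058201058201/50000000000000000)*y^2 + (-138421249532361/500000000000000000)*y^3 + (68526463615749/5000000000000000000)*y^4 + (-255494799145593/500000000000000000000)*y^5 + (9104373265161/625000000000000000000)*y^6 + (-19933606794277/62500000000000000000000)*y^7 + (9262047739581/1562500000000000000000000)*y^8 + (-67140367247197/500000000000000000000000000)*y^9.
Lemma q_PhiE_sign y : 0 <= y <= (97969/40000) -> 0 < q_PhiE y.
Proof. intros [H0 H1]. unfold q_PhiE.
{ assert (Ht: 0 <= y - (0) <= (97969/40000)) by lra.
  pose proof (pw_bnd _ _ 1 Ht).
  pose proof (pw_bnd _ _ 2 Ht).
  pose proof (pw_bnd _ _ 3 Ht).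
  pose proof (pw_bnd _ _ 4 Ht).
  pose proof (pw_bnd _ _ 5 Ht).
  pose proof (pw_bnd _ _ 6 Ht).
  pose proof (pw_bnd _ _ 7 Ht).
  pose proof (pw_bnd _ _ 8 Ht).
  pose proof (pw_bnd _ _ 9 Ht).
  lra. }
Qed.
Lemma bnd_PhiE x s c : 0 <= x <= (313/200) -> SL x <= s <= SU x -> CL x <= c <= CU x -> 0 <= s -> 0 <= c -> 0 <= SL x -> 0 <= CL x -> p_PhiE x s c >= x^6 * q_PhiE (x^2).
Proof. intros Hx Hs Hc Hs0 Hc0 HSL HCL. unfold p_PhiE, q_PhiE.
pose proof (mono_lo 0 2 1 x s c (SL x) (CL x) ltac:(lra) ltac:(lra) ltac:(lra)).
assert (x^0*(SL x)^2*(CL x)^1 = (1)*x^2 + (-5/6)*x^4 + (91/360)*x^6 + (-41/1008)*x^8 + (7381/1814400)*x^10 + (-949/3421440)*x^12 + (22991/1676505600)*x^14 + (-527/1026432000)*x^16 + (108547/7242504192000)*x^18 + (-25121/72425041920000)*x^20 + (47587/7435637637120000)*x^22 + (-43/458885065605120)*x^24 + (17173/16060977296179200000)*x^26 + (-377/41299655904460800000)*x^28 + (31/578195182662451200000)*x^30 + (-1/5781951826624512000000)*x^32) by (unfold SU, SL, CU, CL; field).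
pose proof (mono_lo 1 1 2 x s c (SL x) (CL x) ltac:(lra) ltac:(lra) ltac:(lra)).
assert (x^1*(SL x)^1*(CL x)^2 = (1)*x^2 + (-7/6)*x^4 + (61/120)*x^6 + (-547/5040)*x^8 + (703/51840)*x^10 + (-44287/39916800)*x^12 + (15329/239500800)*x^14 + (-137821/50295168000)*x^16 + (72539/804722688000)*x^18 + (-33679/14485008384000)*x^20 + (13729/289700167680000)*x^22 + (-617/811160469504000)*x^24 + (13799/1460088845107200000)*x^26 + (-17/194678512680960000)*x^28 + (29/52563198423859200000)*x^30 + (-1/525631984238592000000)*x^32) by (unfold SU, SL, CU, CL; field).
pose proof (mono_lo 1 3 0 x s c (SL x) (c) ltac:(lra) ltac:(lra) ltac:(lra)).
assert (x^1*(SL x)^3*(c)^0 = (1)*x^4 + (-1/2)*x^6 + (13/120)*x^8 + (-41/3024)*x^10 + (671/604800)*x^12 + (-73/1140480)*x^14 + (22991/8382528000)*x^16 + (-31/342144000)*x^18 + (5713/2414168064000)*x^20 + (-25121/506975293440000)*x^22 + (2069/2478545879040000)*x^24 + (-43/3824042213376000)*x^26 + (17173/144548795665612800000)*x^28 + (-13/13766551968153600000)*x^30 + (1/192731727554150400000)*x^32 + (-1/63601470092869632000000)*x^34) by (unfold SU, SL, CU, CL; field).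
pose proof (mono_up 2 0 3 x s c (s) (CU x) ltac:(lra) ltac:(lra) ltac:(lra)).
assert (x^2*(s)^0*(CU x)^3 = (1)*x^2 + (-3/2)*x^4 + (7/8)*x^6 + (-61/240)*x^8 + (547/13440)*x^10 + (-703/172800)*x^12 + (44287/159667200)*x^14 + (-73/5322240)*x^16 + (15329/29804544000)*x^18 + (-24329/1609445376000)*x^20 + (703/1970749440000)*x^22 + (-3977/579400335360000)*x^24 + (116141/1070731819745280000)*x^26 + (-5021/3569106065817600000)*x^28 + (1907/128487818369433600000)*x^30 + (-103/825993118089216000000)*x^32 + (37/46255614612996096000000)*x^34 + (-1/277533687677976576000000)*x^36 + (1/109903340320478724096000000)*x^38) by (unfold SU, SL, CU, CL; field).
pose proof (mono_up 2 2 1 x s c (SU x) (CU x) ltac:(lra) ltac:(lra) ltac:(lra)).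
assert (x^2*(SU x)^2*(CU x)^1 = (1)*x^4 + (-5/6)*x^6 + (91/360)*x^8 + (-41/1008)*x^10 + (7381/1814400)*x^12 + (-949/3421440)*x^14 + (597871/43589145600)*x^16 + (-2669/5189184000)*x^18 + (1423879/94152554496000)*x^20 + (-336653/941525544960000)*x^22 + (1204211/173993920708608000)*x^24 + (-3307/29827529264332800)*x^26 + (4006267/2714305163054284800000)*x^28 + (-14471/888318053363220480000)*x^30 + (86521/586289915219725516800000)*x^32 + (-1049/977149858699542528000000)*x^34 + (19/3158786482000153804800000)*x^36 + (-37/1547805376180075364352000000)*x^38 + (1/18573664514160904372224000000)*x^40) by (unfold SU, SL, CU, CL; field).
pose proof (pow_le x 1 ltac:(lra)).
pose proof (pow_le x 2 ltac:(lra)).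
pose proof (pow_le x 3 ltac:(lra)).
pose proof (pow_le x 4 ltac:(lra)).
pose proof (pow_le x 5 ltac:(lra)).
pose proof (pow_le x 6 ltac:(lra)).
pose proof (pow_le x 7 ltac:(lra)).
pose proof (pow_le x 8 ltac:(lra)).
pose proof (pow_le x 9 ltac:(lra)).
pose proof (pow_le x 10 ltac:(lra)).
pose proof (pow_le x 11 ltac:(lra)).
pose proof (pow_le x 12 ltac:(lra)).
pose proof (pow_le x 13 ltac:(lra)).
pose proof (pow_le x 14 ltac:(lra)).
pose proof (pow_le x 15 ltac:(lra)).
pose proof (pow_le x 16 ltac:(lra)).
pose proof (pow_le x 17 ltac:(lra)).
pose proof (pow_le x 18 ltac:(lra)).
pose proof (pow_le x 19 ltac:(lra)).
pose proof (pow_le x 20 ltac:(lra)).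
pose proof (pow_le x 21 ltac:(lra)).
pose proof (pow_le x 22 ltac:(lra)).
pose proof (pow_le x 23 ltac:(lra)).
pose proof (pow_le x 24 ltac:(lra)).
pose proof (pow_le x 25 ltac:(lra)).
pose proof (pow_tail2 25 24 (313/200) x (313/200) ltac:(lra) ltac:(lia) ltac:(simpl; lra)).
pose proof (pow_le x 26 ltac:(lra)).
pose proof (pow_tail2 26 24 (313/200) x (97969/40000) ltac:(lra) ltac:(lia) ltac:(simpl; lra)).
pose proof (pow_le x 27 ltac:(lra)).
pose proof (pow_tail2 27 24 (313/200) x (30664297/8000000) ltac:(lra) ltac:(lia) ltac:(simpl; lra)).
pose proof (pow_le x 28 ltac:(lra)).
pose proof (pow_tail2 28 24 (313/200) x (9597924961/1600000000) ltac:(lra) ltac:(lia) ltac:(simpl; lra)).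
pose proof (pow_le x 29 ltac:(lra)).
pose proof (pow_tail2 29 24 (313/200) x (3004150512793/320000000000) ltac:(lra) ltac:(lia) ltac:(simpl; lra)).
pose proof (pow_le x 30 ltac:(lra)).
pose proof (pow_tail2 30 24 (313/200) x (940299110504209/64000000000000) ltac:(lra) ltac:(lia) ltac:(simpl; lra)).
pose proof (pow_le x 31 ltac:(lra)).
pose proof (pow_tail2 31 24 (313/200) x (294313621587817417/12800000000000000) ltac:(lra) ltac:(lia) ltac:(simpl; lra)).
pose proof (pow_le x 32 ltac:(lra)).
pose proof (pow_tail2 32 24 (313/200) x (92120163556986851521/2560000000000000000) ltac:(lra) ltac:(lia) ltac:(simpl; lra)).
pose proof (pow_le x 33 ltac:(lra)).
pose proof (pow_tail2 33 24 (313/200) x (28833611193336884526073/512000000000000000000) ltac:(lra) ltac:(lia) ltac:(simpl; lra)).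
pose proof (pow_le x 34 ltac:(lra)).
pose proof (pow_tail2 34 24 (313/200) x (9024920303514444856660849/102400000000000000000000) ltac:(lra) ltac:(lia) ltac:(simpl; lra)).
pose proof (pow_le x 35 ltac:(lra)).
pose proof (pow_tail2 35 24 (313/200) x (2824800055000021240134845737/20480000000000000000000000) ltac:(lra) ltac:(lia) ltac:(simpl; lra)).
pose proof (pow_le x 36 ltac:(lra)).
pose proof (pow_tail2 36 24 (313/200) x (884162417215006648162206715681/4096000000000000000000000000) ltac:(lra) ltac:(lia) ltac:(simpl; lra)).
pose proof (pow_le x 37 ltac:(lra)).
pose proof (pow_tail2 37 24 (313/200) x (276742836588297080874770702008153/819200000000000000000000000000) ltac:(lra) ltac:(lia) ltac:(simpl; lra)).
pose proof (pow_le x 38 ltac:(lra)).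
pose proof (pow_tail2 38 24 (313/200) x (86620507852136986313803229728551889/163840000000000000000000000000000) ltac:(lra) ltac:(lia) ltac:(simpl; lra)).
pose proof (pow_le x 39 ltac:(lra)).
pose proof (pow_tail2 39 24 (313/200) x (27112218957718876716220410905036741257/32768000000000000000000000000000000) ltac:(lra) ltac:(lia) ltac:(simpl; lra)).
pose proof (pow_le x 40 ltac:(lra)).
pose proof (pow_tail2 40 24 (313/200) x (8486124533766008412176988613276500013441/6553600000000000000000000000000000000) ltac:(lra) ltac:(lia) ltac:(simpl; lra)).
lra. Qed.
Lemma mach_PhiE x : 0 < x <= (313/200) -> x < PI/2 -> 0 < p_PhiE x (sin x) (cos x).
Proof. intros Hx Hx2. destruct (trig_facts x ltac:(lra)) as (Hs & Hc & Hs0 & Hc0 & Hxb).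
pose proof (SL_nonneg x ltac:(lra)) as HSL.
pose proof (CL_nonneg x ltac:(lra)) as HCL.
pose proof (bnd_PhiE x (sin x) (cos x) ltac:(lra) Hs Hc ltac:(lra) ltac:(lra) HSL HCL) as Hb.
pose proof (q_PhiE_sign (x^2) ltac:(split; nra)) as Hq.
pose proof (pow_lt x 6 ltac:(lra)) as Hm.
pose proof (Rmult_lt_0_compat _ _ Hm Hq). lra. Qed.

Definition p_Phi1 (x s c : R) : R := (-3)*(x^0*s^2*c^1) + (6)*(x^1*s^1*c^2) + (5)*(x^1*s^3*c^0) + (-3)*(x^2*s^0*c^3) + (-3)*(x^2*s^2*c^1) + (-2)*(x^3*s^1*c^2) + (-2)*(x^3*s^3*c^0).
Definition q_Phi1 (y:R) : R := (169312169312169/100000000000000000) + (-17636684303351/62500000000000000)*y^1 + (22878769158531/1000000000000000000)*y^2 + (-118518955324511/100000000000000000000)*y^3 + (424733669883581/10000000000000000000000)*y^4 + (-103807698604877/100000000000000000000000)*y^5 + (131429695398941/10000000000000000000000000)*y^6 + (48082599472029/200000000000000000000000000)*y^7 + (-214001066610499/10000000000000000000000000000)*y^8 + (717846238630617/1000000000000000000000000000000)*y^9.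
Lemma q_Phi1_sign y : 0 <= y <= (97969/40000) -> 0 < q_Phi1 y.
Proof. intros [H0 H1]. unfold q_Phi1.
{ assert (Ht: 0 <= y - (0) <= (97969/40000)) by lra.
  pose proof (pw_bnd _ _ 1 Ht).
  pose proof (pw_bnd _ _ 2 Ht).
  pose proof (pw_bnd _ _ 3 Ht).
  pose proof (pw_bnd _ _ 4 Ht).
  pose proof (pw_bnd _ _ 5 Ht).
  pose proof (pw_bnd _ _ 6 Ht).
  pose proof (pw_bnd _ _ 7 Ht).
  pose proof (pw_bnd _ _ 8 Ht).
  pose proof (pw_bnd _ _ 9 Ht).
  lra. }
Qed.
Lemma bnd_Phi1 x s c : 0 <= x <= (313/200) -> SL x <= s <= SU x -> CL x <= c <= CU x -> 0 <= s -> 0 <= c -> 0 <= SL x -> 0 <= CL x -> p_Phi1 x s c >= x^10 * q_Phi1 (x^2).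
Proof. intros Hx Hs Hc Hs0 Hc0 HSL HCL. unfold p_Phi1, q_Phi1.
pose proof (mono_up 0 2 1 x s c (SU x) (CU x) ltac:(lra) ltac:(lra) ltac:(lra)).
assert (x^0*(SU x)^2*(CU x)^1 = (1)*x^2 + (-5/6)*x^4 + (91/360)*x^6 + (-41/1008)*x^8 + (7381/1814400)*x^10 + (-949/3421440)*x^12 + (597871/43589145600)*x^14 + (-2669/5189184000)*x^16 + (1423879/94152554496000)*x^18 + (-336653/941525544960000)*x^20 + (1204211/173993920708608000)*x^22 + (-3307/29827529264332800)*x^24 + (4006267/2714305163054284800000)*x^26 + (-14471/888318053363220480000)*x^28 + (86521/586289915219725516800000)*x^30 + (-1049/977149858699542528000000)*x^32 + (19/3158786482000153804800000)*x^34 + (-37/1547805376180075364352000000)*x^36 + (1/18573664514160904372224000000)*x^38) by (unfold SU, SL, CU, CL; field).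
pose proof (mono_lo 1 1 2 x s c (SL x) (CL x) ltac:(lra) ltac:(lra) ltac:(lra)).
assert (x^1*(SL x)^1*(CL x)^2 = (1)*x^2 + (-7/6)*x^4 + (61/120)*x^6 + (-547/5040)*x^8 + (703/51840)*x^10 + (-44287/39916800)*x^12 + (15329/239500800)*x^14 + (-137821/50295168000)*x^16 + (72539/804722688000)*x^18 + (-33679/14485008384000)*x^20 + (13729/289700167680000)*x^22 + (-617/811160469504000)*x^24 + (13799/1460088845107200000)*x^26 + (-17/194678512680960000)*x^28 + (29/52563198423859200000)*x^30 + (-1/525631984238592000000)*x^32) by (unfold SU, SL, CU, CL; field).
pose proof (mono_lo 1 3 0 x s c (SL x) (c) ltac:(lra) ltac:(lra) ltac:(lra)).
assert (x^1*(SL x)^3*(c)^0 = (1)*x^4 + (-1/2)*x^6 + (13/120)*x^8 + (-41/3024)*x^10 + (671/604800)*x^12 + (-73/1140480)*x^14 + (22991/8382528000)*x^16 + (-31/342144000)*x^18 + (5713/2414168064000)*x^20 + (-25121/506975293440000)*x^22 + (2069/2478545879040000)*x^24 + (-43/3824042213376000)*x^26 + (17173/144548795665612800000)*x^28 + (-13/13766551968153600000)*x^30 + (1/192731727554150400000)*x^32 + (-1/63601470092869632000000)*x^34) by (unfold SU, SL, CU, CL; field).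
pose proof (mono_up 2 0 3 x s c (s) (CU x) ltac:(lra) ltac:(lra) ltac:(lra)).
assert (x^2*(s)^0*(CU x)^3 = (1)*x^2 + (-3/2)*x^4 + (7/8)*x^6 + (-61/240)*x^8 + (547/13440)*x^10 + (-703/172800)*x^12 + (44287/159667200)*x^14 + (-73/5322240)*x^16 + (15329/29804544000)*x^18 + (-24329/1609445376000)*x^20 + (703/1970749440000)*x^22 + (-3977/579400335360000)*x^24 + (116141/1070731819745280000)*x^26 + (-5021/3569106065817600000)*x^28 + (1907/128487818369433600000)*x^30 + (-103/825993118089216000000)*x^32 + (37/46255614612996096000000)*x^34 + (-1/277533687677976576000000)*x^36 + (1/109903340320478724096000000)*x^38) by (unfold SU, SL, CU, CL; field).
pose proof (mono_up 2 2 1 x s c (SU x) (CU x) ltac:(lra) ltac:(lra) ltac:(lra)).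
assert (x^2*(SU x)^2*(CU x)^1 = (1)*x^4 + (-5/6)*x^6 + (91/360)*x^8 + (-41/1008)*x^10 + (7381/1814400)*x^12 + (-949/3421440)*x^14 + (597871/43589145600)*x^16 + (-2669/5189184000)*x^18 + (1423879/94152554496000)*x^20 + (-336653/941525544960000)*x^22 + (1204211/173993920708608000)*x^24 + (-3307/29827529264332800)*x^26 + (4006267/2714305163054284800000)*x^28 + (-14471/888318053363220480000)*x^30 + (86521/586289915219725516800000)*x^32 + (-1049/977149858699542528000000)*x^34 + (19/3158786482000153804800000)*x^36 + (-37/1547805376180075364352000000)*x^38 + (1/18573664514160904372224000000)*x^40) by (unfold SU, SL, CU, CL; field).
pose proof (mono_up 3 1 2 x s c (SU x) (CU x) ltac:(lra) ltac:(lra) ltac:(lra)).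
assert (x^3*(SU x)^1*(CU x)^2 = (1)*x^4 + (-7/6)*x^6 + (61/120)*x^8 + (-547/5040)*x^10 + (703/51840)*x^12 + (-44287/39916800)*x^14 + (398581/6227020800)*x^16 + (-298933/108972864000)*x^18 + (949391/10461394944000)*x^20 + (-12833/5380145971200)*x^22 + (574471/11298306539520000)*x^24 + (-516419/579979735695360000)*x^26 + (2689007/208792704850329600000)*x^28 + (-27491/178965175585996800000)*x^30 + (22499/15033074749223731200000)*x^32 + (-239/20499647385305088000000)*x^34 + (29/416300531516964864000000)*x^36 + (-1/3401770057538627174400000)*x^38 + (1/1428743424166223413248000000)*x^40) by (unfold SU, SL, CU, CL; field).
pose proof (mono_up 3 3 0 x s c (SU x) (c) ltac:(lra) ltac:(lra) ltac:(lra)).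
assert (x^3*(SU x)^3*(c)^0 = (1)*x^6 + (-1/2)*x^8 + (13/120)*x^10 + (-41/3024)*x^12 + (671/604800)*x^14 + (-73/1140480)*x^16 + (597871/217945728000)*x^18 + (-157/1729728000)*x^20 + (74941/31384184832000)*x^22 + (-336653/6590678814720000)*x^24 + (52357/57997973569536000)*x^26 + (-3307/248562743869440000)*x^28 + (4006267/24428746467488563200000)*x^30 + (-499/296106017787740160000)*x^32 + (2791/195429971739908505600000)*x^34 + (-1049/10748648445694967808000000)*x^36 + (19/36852508956668461056000000)*x^38 + (-1/515935125393358454784000000)*x^40 + (1/241457638684091756838912000000)*x^42) by (unfold SU, SL, CU, CL; field).
pose proof (pow_le x 1 ltac:(lra)).
pose proof (pow_le x 2 ltac:(lra)).
pose proof (pow_le x 3 ltac:(lra)).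
pose proof (pow_le x 4 ltac:(lra)).
pose proof (pow_le x 5 ltac:(lra)).
pose proof (pow_le x 6 ltac:(lra)).
pose proof (pow_le x 7 ltac:(lra)).
pose proof (pow_le x 8 ltac:(lra)).
pose proof (pow_le x 9 ltac:(lra)).
pose proof (pow_le x 10 ltac:(lra)).
pose proof (pow_le x 11 ltac:(lra)).
pose proof (pow_le x 12 ltac:(lra)).
pose proof (pow_le x 13 ltac:(lra)).
pose proof (pow_le x 14 ltac:(lra)).
pose proof (pow_le x 15 ltac:(lra)).
pose proof (pow_le x 16 ltac:(lra)).
pose proof (pow_le x 17 ltac:(lra)).
pose proof (pow_le x 18 ltac:(lra)).
pose proof (pow_le x 19 ltac:(lra)).
pose proof (pow_le x 20 ltac:(lra)).
pose proof (pow_le x 21 ltac:(lra)).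
pose proof (pow_le x 22 ltac:(lra)).
pose proof (pow_le x 23 ltac:(lra)).
pose proof (pow_le x 24 ltac:(lra)).
pose proof (pow_le x 25 ltac:(lra)).
pose proof (pow_le x 26 ltac:(lra)).
pose proof (pow_le x 27 ltac:(lra)).
pose proof (pow_le x 28 ltac:(lra)).
pose proof (pow_le x 29 ltac:(lra)).
pose proof (pow_tail2 29 28 (313/200) x (313/200) ltac:(lra) ltac:(lia) ltac:(simpl; lra)).
pose proof (pow_le x 30 ltac:(lra)).
pose proof (pow_tail2 30 28 (313/200) x (97969/40000) ltac:(lra) ltac:(lia) ltac:(simpl; lra)).
pose proof (pow_le x 31 ltac:(lra)).
pose proof (pow_tail2 31 28 (313/200) x (30664297/8000000) ltac:(lra) ltac:(lia) ltac:(simpl; lra)).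
pose proof (pow_le x 32 ltac:(lra)).
pose proof (pow_tail2 32 28 (313/200) x (9597924961/1600000000) ltac:(lra) ltac:(lia) ltac:(simpl; lra)).
pose proof (pow_le x 33 ltac:(lra)).
pose proof (pow_tail2 33 28 (313/200) x (3004150512793/320000000000) ltac:(lra) ltac:(lia) ltac:(simpl; lra)).
pose proof (pow_le x 34 ltac:(lra)).
pose proof (pow_tail2 34 28 (313/200) x (940299110504209/64000000000000) ltac:(lra) ltac:(lia) ltac:(simpl; lra)).
pose proof (pow_le x 35 ltac:(lra)).
pose proof (pow_tail2 35 28 (313/200) x (294313621587817417/12800000000000000) ltac:(lra) ltac:(lia) ltac:(simpl; lra)).
pose proof (pow_le x 36 ltac:(lra)).
pose proof (pow_tail2 36 28 (313/200) x (92120163556986851521/2560000000000000000) ltac:(lra) ltac:(lia) ltac:(simpl; lra)).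
pose proof (pow_le x 37 ltac:(lra)).
pose proof (pow_tail2 37 28 (313/200) x (28833611193336884526073/512000000000000000000) ltac:(lra) ltac:(lia) ltac:(simpl; lra)).
pose proof (pow_le x 38 ltac:(lra)).
pose proof (pow_tail2 38 28 (313/200) x (9024920303514444856660849/102400000000000000000000) ltac:(lra) ltac:(lia) ltac:(simpl; lra)).
pose proof (pow_le x 39 ltac:(lra)).
pose proof (pow_tail2 39 28 (313/200) x (2824800055000021240134845737/20480000000000000000000000) ltac:(lra) ltac:(lia) ltac:(simpl; lra)).
pose proof (pow_le x 40 ltac:(lra)).
pose proof (pow_tail2 40 28 (313/200) x (884162417215006648162206715681/4096000000000000000000000000) ltac:(lra) ltac:(lia) ltac:(simpl; lra)).
pose proof (pow_le x 41 ltac:(lra)).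
pose proof (pow_tail2 41 28 (313/200) x (276742836588297080874770702008153/819200000000000000000000000000) ltac:(lra) ltac:(lia) ltac:(simpl; lra)).
pose proof (pow_le x 42 ltac:(lra)).
pose proof (pow_tail2 42 28 (313/200) x (86620507852136986313803229728551889/163840000000000000000000000000000) ltac:(lra) ltac:(lia) ltac:(simpl; lra)).
lra. Qed.
Lemma mach_Phi1 x : 0 < x <= (313/200) -> x < PI/2 -> 0 < p_Phi1 x (sin x) (cos x).
Proof. intros Hx Hx2. destruct (trig_facts x ltac:(lra)) as (Hs & Hc & Hs0 & Hc0 & Hxb).
pose proof (SL_nonneg x ltac:(lra)) as HSL.
pose proof (CL_nonneg x ltac:(lra)) as HCL.
pose proof (bnd_Phi1 x (sin x) (cos x) ltac:(lra) Hs Hc ltac:(lra) ltac:(lra) HSL HCL) as Hb.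
pose proof (q_Phi1_sign (x^2) ltac:(split; nra)) as Hq.
pose proof (pow_lt x 10 ltac:(lra)) as Hm.
pose proof (Rmult_lt_0_compat _ _ Hm Hq). lra. Qed.

Definition p_Phi2 (x s c : R) : R := (-3)*(x^0*s^2*c^3) + (-1/35)*(x^0*s^4*c^1) + (6)*(x^1*s^1*c^4) + (5)*(x^1*s^3*c^2) + (-1/35)*(x^1*s^5*c^0) + (-3)*(x^2*s^0*c^5) + (-102/35)*(x^2*s^2*c^3) + (3/35)*(x^2*s^4*c^1) + (-72/35)*(x^3*s^1*c^4) + (-72/35)*(x^3*s^3*c^2).
Definition q_Phi2 (y:R) : R := (-11609977324263/10000000000000000) + (137219036474989/200000000000000000)*y^1 + (-167388125306917/1000000000000000000)*y^2 + (60418980720261/2500000000000000000)*y^3 + (-59929441743973/25000000000000000000)*y^4 + (35342667123097/200000000000000000000)*y^5 + (-100655231197507/10000000000000000000000)*y^6 + (221636008912289/500000000000000000000000)*y^7 + (-28262392011301/2000000000000000000000000)*y^8 + (246227148958631/1000000000000000000000000000)*y^9.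
Lemma q_Phi2_sign y : 0 <= y <= (97969/40000) -> q_Phi2 y < 0.
Proof. intros [H0 H1]. unfold q_Phi2.
destruct (Rle_lt_dec y (97969/80000)) as [Hy|Hy].
{ assert (Ht: 0 <= y - (0) <= (97969/80000)) by lra.
  pose proof (pw_bnd _ _ 1 Ht).
  pose proof (pw_bnd _ _ 2 Ht).
  pose proof (pw_bnd _ _ 3 Ht).
  pose proof (pw_bnd _ _ 4 Ht).
  pose proof (pw_bnd _ _ 5 Ht).
  pose proof (pw_bnd _ _ 6 Ht).
  pose proof (pw_bnd _ _ 7 Ht).
  pose proof (pw_bnd _ _ 8 Ht).
  pose proof (pw_bnd _ _ 9 Ht).
  lra. }
assert (H0' : (97969/80000) <= y) by lra. clear H0 Hy. rename H0' into H0.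
{ assert (Ht: 0 <= y - (97969/80000) <= (97969/80000)) by lra.
  pose proof (pw_bnd _ _ 1 Ht).
  pose proof (pw_bnd _ _ 2 Ht).
  pose proof (pw_bnd _ _ 3 Ht).
  pose proof (pw_bnd _ _ 4 Ht).
  pose proof (pw_bnd _ _ 5 Ht).
  pose proof (pw_bnd _ _ 6 Ht).
  pose proof (pw_bnd _ _ 7 Ht).
  pose proof (pw_bnd _ _ 8 Ht).
  pose proof (pw_bnd _ _ 9 Ht).
  lra. }
Qed.
Lemma bnd_Phi2 x s c : 0 <= x <= (313/200) -> SL x <= s <= SU x -> CL x <= c <= CU x -> 0 <= s -> 0 <= c -> 0 <= SL x -> 0 <= CL x -> p_Phi2 x s c <= x^12 * q_Phi2 (x^2).
Proof. intros Hx Hs Hc Hs0 Hc0 HSL HCL. unfold p_Phi2, q_Phi2.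
pose proof (mono_lo 0 2 3 x s c (SL x) (CL x) ltac:(lra) ltac:(lra) ltac:(lra)).
assert (x^0*(SL x)^2*(CL x)^3 = (1)*x^2 + (-11/6)*x^4 + (511/360)*x^6 + (-3103/5040)*x^8 + (307021/1814400)*x^10 + (-546143/17107200)*x^12 + (3670847/838252800)*x^14 + (-11465441/25147584000)*x^16 + (134848211/3621252096000)*x^18 + (-88669919/36212520960000)*x^20 + (295145441/2230691291136000)*x^22 + (-399594577/66920738734080000)*x^24 + (610078531/2676829549363200000)*x^26 + (-357850039/48182931888537600000)*x^28 + (116923621/562134205366272000000)*x^30 + (-16954087/3372805232197632000000)*x^32 + (18542233/176612346704166912000000)*x^34 + (-12259549/6475786045819453440000000)*x^36 + (5748643/195827770025580272025600000)*x^38 + (-57061379/146870827519185204019200000000)*x^40 + (15280487/3524899860460444896460800000000)*x^42 + (-31331/783311080102321088102400000000)*x^44 + (31289/105746995813813346893824000000000)*x^46 + (-3169/1903445924648640244088832000000000)*x^48 + (1/155383340787644101558272000000000)*x^50 + (-1/76137836985945609763553280000000000)*x^52) by (unfold SU, SL, CU, CL; field).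
pose proof (mono_lo 0 4 1 x s c (SL x) (CL x) ltac:(lra) ltac:(lra) ltac:(lra)).
assert (x^0*(SL x)^4*(CL x)^1 = (1)*x^4 + (-7/6)*x^6 + (23/40)*x^8 + (-2497/15120)*x^10 + (8203/259200)*x^12 + (-11617/2661120)*x^14 + (636259/1397088000)*x^16 + (-2808409/75442752000)*x^18 + (703841/287400960000)*x^20 + (-33569581/253487646720000)*x^22 + (7418093/1239272939520000)*x^24 + (-104327/455243120640000)*x^26 + (3798545831/505920784829644800000)*x^28 + (-3219488353/15177623544889344000000)*x^30 + (130321/25086981065932800000)*x^32 + (-22158593/200344630792539340800000)*x^34 + (41372723233/20194738783887965552640000000)*x^36 + (-53244997/1615579102711037244211200000)*x^38 + (222170513/484673730813311173263360000000)*x^40 + (-79515901/14540211924399335197900800000000)*x^42 + (2828213/51181545973885659896610816000000)*x^44 + (-10680421/23031695688248546953474867200000000)*x^46 + (7363/2350173029413117036068864000000000)*x^48 + (-1241/76772318960828489844916224000000000)*x^50 + (53/921267827529941878138994688000000000)*x^52 + (-1/9212678275299418781389946880000000000)*x^54) by (unfold SU, SL, CU, CL; field).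
pose proof (mono_up 1 1 4 x s c (SU x) (CU x) ltac:(lra) ltac:(lra) ltac:(lra)).
assert (x^1*(SU x)^1*(CU x)^4 = (1)*x^2 + (-13/6)*x^4 + (241/120)*x^6 + (-5293/5040)*x^8 + (125761/362880)*x^10 + (-3084973/39916800)*x^12 + (76592881/6227020800)*x^14 + (-39792479/27243216000)*x^16 + (701586791/5230697472000)*x^18 + (-2396977/244552089600)*x^20 + (253489567/434550251520000)*x^22 + (-8356463293/289989867847680000)*x^24 + (125296414871/104396352425164800000)*x^26 + (-1273551043/29827529264332800000)*x^28 + (131426333/100220498328158208000)*x^30 + (-1025295773/29230978679046144000000)*x^32 + (2968041541/3607937939813695488000000)*x^34 + (-47240920171/2778112213656545525760000000)*x^36 + (31092325027/100012039691635638927360000000)*x^38 + (-21156527339/4200505667048696834949120000000)*x^40 + (192908473/2666987725110283704729600000000)*x^42 + (-926964263/1008121360091687240387788800000000)*x^44 + (170109427/16496531346954882115436544000000000)*x^46 + (-101234449/998040146490770367983910912000000000)*x^48 + (5194183/5988240878944622207903465472000000000)*x^50 + (-1143127/179647226368338666237103964160000000000)*x^52 + (8059/205311115849529904270975959040000000000)*x^54 + (-10211/51738401194081535876285941678080000000000)*x^56 + (953/1241721628657956861030862600273920000000000)*x^58 + (-19/9105958610158350314226325735342080000000000)*x^60 + (1/327814509965700611312147726472314880000000000)*x^62) by (unfold SU, SL, CU, CL; field).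
pose proof (mono_up 1 3 2 x s c (SU x) (CU x) ltac:(lra) ltac:(lra) ltac:(lra)).
assert (x^1*(SU x)^3*(CU x)^2 = (1)*x^4 + (-3/2)*x^6 + (113/120)*x^8 + (-1007/3024)*x^10 + (5119/67200)*x^12 + (-2791/228096)*x^14 + (317741971/217945728000)*x^16 + (-7303253/54486432000)*x^18 + (153768973/15692092416000)*x^20 + (-1922156279/3295339407360000)*x^22 + (4178364221/144994933923840000)*x^24 + (-5221732871/4349848017715200000)*x^26 + (521826245027/12214373233744281600000)*x^28 + (-224566367107/171001225272419942400000)*x^30 + (360979328627/10260073516345196544000000)*x^32 + (-40026695353/48368918005627355136000000)*x^34 + (931023911171/54173188166302637752320000000)*x^36 + (-196380149477/620529246268557486981120000000)*x^38 + (5517433808981/1064828186596844647659601920000000)*x^40 + (-12766091479/169020347078864229787238400000000)*x^42 + (16697443129/17037250985549514362553630720000000)*x^44 + (-190595799257/16866878475694019218928094412800000000)*x^46 + (116734568297/1012012708541641153135685664768000000000)*x^48 + (-314603507/303603812562492345940705699430400000000)*x^50 + (36972157/4554057188437385189110585491456000000000)*x^52 + (-1661753/30360381256249234594070569943040000000000)*x^54 + (32399/104092735735711661465384811233280000000000)*x^56 + (-1031/712456946813315371807522707996672000000000)*x^58 + (103/19729576988676425680823705759907840000000000)*x^60 + (-61/4616721015350283609312747147818434560000000000)*x^62 + (1/55400652184203403311752965773821214720000000000)*x^64) by (unfold SU, SL, CU, CL; field).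
pose proof (mono_lo 1 5 0 x s c (SL x) (c) ltac:(lra) ltac:(lra) ltac:(lra)).
assert (x^1*(SL x)^5*(c)^0 = (1)*x^6 + (-5/6)*x^8 + (23/72)*x^10 + (-227/3024)*x^12 + (631/51840)*x^14 + (-11617/7983360)*x^16 + (37427/279417600)*x^18 + (-147811/15088550400)*x^20 + (703841/1207084032000)*x^22 + (-1459547/50697529344000)*x^24 + (7418093/6196364697600000)*x^26 + (-104327/2458312851456000)*x^28 + (130984339/101184156965928960000)*x^30 + (-103854463/3035524708977868800000)*x^32 + (130321/165574075035156480000)*x^34 + (-22158593/1402412415547775385600000)*x^36 + (1118181709/4038947756777593110528000000)*x^38 + (-4095769/969347461626622346526720000)*x^40 + (5418793/96934746162662234652672000000)*x^42 + (-1849207/2908042384879867039580160000000)*x^44 + (2828213/460633913764970939069497344000000)*x^46 + (-227243/4606339137649709390694973440000000)*x^48 + (7363/23031695688248546953474867200000000)*x^50 + (-73/46063391376497093906949734400000000)*x^52 + (1/184253565505988375627798937600000000)*x^54 + (-1/101339461028293606595289415680000000000)*x^56) by (unfold SU, SL, CU, CL; field).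
pose proof (mono_lo 2 0 5 x s c (s) (CL x) ltac:(lra) ltac:(lra) ltac:(lra)).
assert (x^2*(s)^0*(CL x)^5 = (1)*x^2 + (-5/2)*x^4 + (65/24)*x^6 + (-241/144)*x^8 + (5293/8064)*x^10 + (-125761/725760)*x^12 + (23371/725760)*x^14 + (-19129/4354560)*x^16 + (3339101/7315660800)*x^18 + (-545017/14631321600)*x^20 + (6447647/2633637888000)*x^22 + (-15473/117050572800)*x^24 + (1756961/294967443456000)*x^26 + (-2005663/8849023303680000)*x^28 + (39001/5309413982208000)*x^30 + (-487121/2389236291993600000)*x^32 + (5201093/1070377858813132800000)*x^34 + (-91213/917466736125542400000)*x^36 + (670619/385336029172727808000000)*x^38 + (-3989/154134411669091123200000)*x^40 + (627281/1942093587030548152320000000)*x^42 + (-12889/3884187174061096304640000000)*x^44 + (317/11652561522183288913920000000)*x^46 + (-59/349576845665498667417600000000)*x^48 + (1/1398307382661994669670400000000)*x^50 + (-1/629238322197897601351680000000000)*x^52) by (unfold SU, SL, CU, CL; field).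
pose proof (mono_lo 2 2 3 x s c (SL x) (CL x) ltac:(lra) ltac:(lra) ltac:(lra)).
assert (x^2*(SL x)^2*(CL x)^3 = (1)*x^4 + (-11/6)*x^6 + (511/360)*x^8 + (-3103/5040)*x^10 + (307021/1814400)*x^12 + (-546143/17107200)*x^14 + (3670847/838252800)*x^16 + (-11465441/25147584000)*x^18 + (134848211/3621252096000)*x^20 + (-88669919/36212520960000)*x^22 + (295145441/2230691291136000)*x^24 + (-399594577/66920738734080000)*x^26 + (610078531/2676829549363200000)*x^28 + (-357850039/48182931888537600000)*x^30 + (116923621/562134205366272000000)*x^32 + (-16954087/3372805232197632000000)*x^34 + (18542233/176612346704166912000000)*x^36 + (-12259549/6475786045819453440000000)*x^38 + (5748643/195827770025580272025600000)*x^40 + (-57061379/146870827519185204019200000000)*x^42 + (15280487/3524899860460444896460800000000)*x^44 + (-31331/783311080102321088102400000000)*x^46 + (31289/105746995813813346893824000000000)*x^48 + (-3169/1903445924648640244088832000000000)*x^50 + (1/155383340787644101558272000000000)*x^52 + (-1/76137836985945609763553280000000000)*x^54) by (unfold SU, SL, CU, CL; field).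
pose proof (mono_up 2 4 1 x s c (SU x) (CU x) ltac:(lra) ltac:(lra) ltac:(lra)).
assert (x^2*(SU x)^4*(CU x)^1 = (1)*x^6 + (-7/6)*x^8 + (23/40)*x^10 + (-2497/15120)*x^12 + (8203/259200)*x^14 + (-11617/2661120)*x^16 + (99256999/217945728000)*x^18 + (-2281957/61297236000)*x^20 + (9152453/3736212480000)*x^22 + (-436842473/3295339407360000)*x^24 + (2611389043/434984801771520000)*x^26 + (-9562877/41427123978240000)*x^28 + (652170818477/85500612636209971200000)*x^30 + (-561223678747/2565018379086299136000000)*x^32 + (394184113/71748765848567808000000)*x^34 + (-8232456313/67716485207878297190400000)*x^36 + (739443478967/310264623134278743490560000000)*x^38 + (-21815703997/525063208381087104368640000000)*x^40 + (27503726641/42593127463873785906384076800000)*x^42 + (-13623884317/1521183123709778068085145600000000)*x^44 + (62303266849/562229282523133973964269813760000000)*x^46 + (-61771697821/50600635427082057656784283238400000000)*x^48 + (739065007/61959961747447417538919530496000000000)*x^50 + (-51989009/506006354270820576567842832384000000000)*x^52 + (91533173/118405486899372014916875222777856000000000)*x^54 + (-1978429/394684956331240049722917409259520000000000)*x^56 + (408671/14885261210206767589550028006359040000000000)*x^58 + (-153931/1250361941657368477522202352534159360000000000)*x^60 + (12871/30008686599776843460532856460819824640000000000)*x^62 + (-1/952656717453233125731201792406978560000000000)*x^64 + (1/720208478394644243052788555059675791360000000000)*x^66) by (unfold SU, SL, CU, CL; field).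
pose proof (mono_lo 3 1 4 x s c (SL x) (CL x) ltac:(lra) ltac:(lra) ltac:(lra)).
assert (x^3*(SL x)^1*(CL x)^4 = (1)*x^4 + (-13/6)*x^6 + (241/120)*x^8 + (-5293/5040)*x^10 + (125761/362880)*x^12 + (-3084973/39916800)*x^14 + (1472939/119750400)*x^16 + (-36731161/25147584000)*x^18 + (53964299/402361344000)*x^20 + (-70961557/7242504192000)*x^22 + (84382069/144850083840000)*x^24 + (-3880157/135193411584000)*x^26 + (26286979/22122558259200000)*x^28 + (-60999913/1460088845107200000)*x^30 + (31459/25030094487552000)*x^32 + (-2718157/83623270219776000000)*x^34 + (18270751/25230335243452416000000)*x^36 + (-8176129/588707822347223040000000)*x^38 + (4841657/21193481604500029440000000)*x^40 + (-776717/242761698378818519040000000)*x^42 + (575129/15259306755240021196800000000)*x^44 + (-234767/640890883720080890265600000000)*x^46 + (3911/1373337607971601907712000000000)*x^48 + (-323/19226726511602426707968000000000)*x^50 + (47/692162154417687361486848000000000)*x^52 + (-1/6921621544176873614868480000000000)*x^54) by (unfold SU, SL, CU, CL; field).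
pose proof (mono_lo 3 3 2 x s c (SL x) (CL x) ltac:(lra) ltac:(lra) ltac:(lra)).
assert (x^3*(SL x)^3*(CL x)^2 = (1)*x^6 + (-3/2)*x^8 + (113/120)*x^10 + (-1007/3024)*x^12 + (5119/67200)*x^14 + (-2791/228096)*x^16 + (2036801/1397088000)*x^18 + (-1123537/8382528000)*x^20 + (11825953/1207084032000)*x^22 + (-147738163/253487646720000)*x^24 + (320607473/11153456455680000)*x^26 + (-133028129/111534564556800000)*x^28 + (3043356377/72274397832806400000)*x^30 + (-10326269/8094732557274316800)*x^32 + (506298767/15177623544889344000000)*x^34 + (-756847181/1001723153962696704000000)*x^36 + (4756515359/320551409268062945280000000)*x^38 + (-10192038259/40389477567775931105280000000)*x^40 + (597809743/161557910271103724421120000000)*x^42 + (-225017141/4846737308133111732633600000000)*x^44 + (1168543/2373912150922340440473600000000)*x^46 + (-1006273/232643390790389363166412800000000)*x^48 + (319699/10468952585567521342488576000000000)*x^50 + (-1147/6979301723711680894992384000000000)*x^52 + (17/27917206894846723579969536000000000)*x^54 + (-1/837516206845401707399086080000000000)*x^56) by (unfold SU, SL, CU, CL; field).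
pose proof (pow_le x 1 ltac:(lra)).
pose proof (pow_le x 2 ltac:(lra)).
pose proof (pow_le x 3 ltac:(lra)).
pose proof (pow_le x 4 ltac:(lra)).
pose proof (pow_le x 5 ltac:(lra)).
pose proof (pow_le x 6 ltac:(lra)).
pose proof (pow_le x 7 ltac:(lra)).
pose proof (pow_le x 8 ltac:(lra)).
pose proof (pow_le x 9 ltac:(lra)).
pose proof (pow_le x 10 ltac:(lra)).
pose proof (pow_le x 11 ltac:(lra)).
pose proof (pow_le x 12 ltac:(lra)).
pose proof (pow_le x 13 ltac:(lra)).
pose proof (pow_le x 14 ltac:(lra)).
pose proof (pow_le x 15 ltac:(lra)).
pose proof (pow_le x 16 ltac:(lra)).
pose proof (pow_le x 17 ltac:(lra)).
pose proof (pow_le x 18 ltac:(lra)).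
pose proof (pow_le x 19 ltac:(lra)).
pose proof (pow_le x 20 ltac:(lra)).
pose proof (pow_le x 21 ltac:(lra)).
pose proof (pow_le x 22 ltac:(lra)).
pose proof (pow_le x 23 ltac:(lra)).
pose proof (pow_le x 24 ltac:(lra)).
pose proof (pow_le x 25 ltac:(lra)).
pose proof (pow_le x 26 ltac:(lra)).
pose proof (pow_le x 27 ltac:(lra)).
pose proof (pow_le x 28 ltac:(lra)).
pose proof (pow_le x 29 ltac:(lra)).
pose proof (pow_le x 30 ltac:(lra)).
pose proof (pow_le x 31 ltac:(lra)).
pose proof (pow_tail2 31 30 (313/200) x (313/200) ltac:(lra) ltac:(lia) ltac:(simpl; lra)).
pose proof (pow_le x 32 ltac:(lra)).
pose proof (pow_tail2 32 30 (313/200) x (97969/40000) ltac:(lra) ltac:(lia) ltac:(simpl; lra)).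
pose proof (pow_le x 33 ltac:(lra)).
pose proof (pow_tail2 33 30 (313/200) x (30664297/8000000) ltac:(lra) ltac:(lia) ltac:(simpl; lra)).
pose proof (pow_le x 34 ltac:(lra)).
pose proof (pow_tail2 34 30 (313/200) x (9597924961/1600000000) ltac:(lra) ltac:(lia) ltac:(simpl; lra)).
pose proof (pow_le x 35 ltac:(lra)).
pose proof (pow_tail2 35 30 (313/200) x (3004150512793/320000000000) ltac:(lra) ltac:(lia) ltac:(simpl; lra)).
pose proof (pow_le x 36 ltac:(lra)).
pose proof (pow_tail2 36 30 (313/200) x (940299110504209/64000000000000) ltac:(lra) ltac:(lia) ltac:(simpl; lra)).
pose proof (pow_le x 37 ltac:(lra)).
pose proof (pow_tail2 37 30 (313/200) x (294313621587817417/12800000000000000) ltac:(lra) ltac:(lia) ltac:(simpl; lra)).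
pose proof (pow_le x 38 ltac:(lra)).
pose proof (pow_tail2 38 30 (313/200) x (92120163556986851521/2560000000000000000) ltac:(lra) ltac:(lia) ltac:(simpl; lra)).
pose proof (pow_le x 39 ltac:(lra)).
pose proof (pow_tail2 39 30 (313/200) x (28833611193336884526073/512000000000000000000) ltac:(lra) ltac:(lia) ltac:(simpl; lra)).
pose proof (pow_le x 40 ltac:(lra)).
pose proof (pow_tail2 40 30 (313/200) x (9024920303514444856660849/102400000000000000000000) ltac:(lra) ltac:(lia) ltac:(simpl; lra)).
pose proof (pow_le x 41 ltac:(lra)).
pose proof (pow_tail2 41 30 (313/200) x (2824800055000021240134845737/20480000000000000000000000) ltac:(lra) ltac:(lia) ltac:(simpl; lra)).
pose proof (pow_le x 42 ltac:(lra)).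
pose proof (pow_tail2 42 30 (313/200) x (884162417215006648162206715681/4096000000000000000000000000) ltac:(lra) ltac:(lia) ltac:(simpl; lra)).
pose proof (pow_le x 43 ltac:(lra)).
pose proof (pow_tail2 43 30 (313/200) x (276742836588297080874770702008153/819200000000000000000000000000) ltac:(lra) ltac:(lia) ltac:(simpl; lra)).
pose proof (pow_le x 44 ltac:(lra)).
pose proof (pow_tail2 44 30 (313/200) x (86620507852136986313803229728551889/163840000000000000000000000000000) ltac:(lra) ltac:(lia) ltac:(simpl; lra)).
pose proof (pow_le x 45 ltac:(lra)).
pose proof (pow_tail2 45 30 (313/200) x (27112218957718876716220410905036741257/32768000000000000000000000000000000) ltac:(lra) ltac:(lia) ltac:(simpl; lra)).
pose proof (pow_le x 46 ltac:(lra)).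
pose proof (pow_tail2 46 30 (313/200) x (8486124533766008412176988613276500013441/6553600000000000000000000000000000000) ltac:(lra) ltac:(lia) ltac:(simpl; lra)).
pose proof (pow_le x 47 ltac:(lra)).
pose proof (pow_tail2 47 30 (313/200) x (2656156979068760633011397435955544504207033/1310720000000000000000000000000000000000) ltac:(lra) ltac:(lia) ltac:(simpl; lra)).
pose proof (pow_le x 48 ltac:(lra)).
pose proof (pow_tail2 48 30 (313/200) x (831377134448522078132567397454085429816801329/262144000000000000000000000000000000000000) ltac:(lra) ltac:(lia) ltac:(simpl; lra)).
pose proof (pow_le x 49 ltac:(lra)).
pose proof (pow_tail2 49 30 (313/200) x (260221043082387410455493595403128739532658815977/52428800000000000000000000000000000000000000) ltac:(lra) ltac:(lia) ltac:(simpl; lra)).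
pose proof (pow_le x 50 ltac:(lra)).
pose proof (pow_tail2 50 30 (313/200) x (81449186484787259472569495361179295473722209400801/10485760000000000000000000000000000000000000000) ltac:(lra) ltac:(lia) ltac:(simpl; lra)).
pose proof (pow_le x 51 ltac:(lra)).
pose proof (pow_tail2 51 30 (313/200) x (25493595369738412214914252048049119483275051542450713/2097152000000000000000000000000000000000000000000) ltac:(lra) ltac:(lia) ltac:(simpl; lra)).
pose proof (pow_le x 52 ltac:(lra)).
pose proof (pow_tail2 52 30 (313/200) x (7979495350728123023268160891039374398265091132787073169/419430400000000000000000000000000000000000000000000) ltac:(lra) ltac:(lia) ltac:(simpl; lra)).
pose proof (pow_le x 53 ltac:(lra)).
pose proof (pow_tail2 53 30 (313/200) x (2497582044777902506282934358895324186656973524562353901897/83886080000000000000000000000000000000000000000000000) ltac:(lra) ltac:(lia) ltac:(simpl; lra)).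
pose proof (pow_le x 54 ltac:(lra)).
pose proof (pow_tail2 54 30 (313/200) x (781743180015483484466558454334236470423632713188016771293761/16777216000000000000000000000000000000000000000000000000) ltac:(lra) ltac:(lia) ltac:(simpl; lra)).
pose proof (pow_le x 55 ltac:(lra)).
pose proof (pow_tail2 55 30 (313/200) x (244685615344846330638032796206616015242597039227849249414947193/3355443200000000000000000000000000000000000000000000000000) ltac:(lra) ltac:(lia) ltac:(simpl; lra)).
pose proof (pow_le x 56 ltac:(lra)).
pose proof (pow_tail2 56 30 (313/200) x (76586597602936901489704265212670812770932873278316815066878471409/671088640000000000000000000000000000000000000000000000000000) ltac:(lra) ltac:(lia) ltac:(simpl; lra)).
pose proof (pow_le x 57 ltac:(lra)).
pose proof (pow_tail2 57 30 (313/200) x (23971605049719250166277435011565964397301989336113163115932961551017/134217728000000000000000000000000000000000000000000000000000000) ltac:(lra) ltac:(lia) ltac:(simpl; lra)).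
pose proof (pow_le x 58 ltac:(lra)).
pose proof (pow_tail2 58 30 (313/200) x (7503112380562125302044837158620146856355522662203420055287016965468321/26843545600000000000000000000000000000000000000000000000000000000) ltac:(lra) ltac:(lia) ltac:(simpl; lra)).
pose proof (pow_le x 59 ltac:(lra)).
pose proof (pow_tail2 59 30 (313/200) x (2348474175115945219540034030648105966039278593269670477304836310191584473/5368709120000000000000000000000000000000000000000000000000000000000) ltac:(lra) ltac:(lia) ltac:(simpl; lra)).
pose proof (pow_le x 60 ltac:(lra)).
pose proof (pow_tail2 60 30 (313/200) x (735072416811290853716030651592857167370294199693406859396413765089965940049/1073741824000000000000000000000000000000000000000000000000000000000000) ltac:(lra) ltac:(lia) ltac:(simpl; lra)).
pose proof (pow_le x 61 ltac:(lra)).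
pose proof (pow_tail2 61 30 (313/200) x (230077666461934037213117593948564293386902084504036346991077508473159339235337/214748364800000000000000000000000000000000000000000000000000000000000000) ltac:(lra) ltac:(lia) ltac:(simpl; lra)).
pose proof (pow_le x 62 ltac:(lra)).
pose proof (pow_tail2 62 30 (313/200) x (72014309602585353647705806905900623830100352449763376608207260152098873180660481/42949672960000000000000000000000000000000000000000000000000000000000000000) ltac:(lra) ltac:(lia) ltac:(simpl; lra)).
pose proof (pow_le x 63 ltac:(lra)).
pose proof (pow_tail2 63 30 (313/200) x (22540478905609215691731917561546895258821410316775936878368872427606947305546730553/8589934592000000000000000000000000000000000000000000000000000000000000000000) ltac:(lra) ltac:(lia) ltac:(simpl; lra)).
pose proof (pow_le x 64 ltac:(lra)).
pose proof (pow_tail2 64 30 (313/200) x (7055169897455684511512090196764178216011101429150868242929457069840974506636126663089/1717986918400000000000000000000000000000000000000000000000000000000000000000000) ltac:(lra) ltac:(lia) ltac:(simpl; lra)).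
pose proof (pow_le x 65 ltac:(lra)).
pose proof (pow_tail2 65 30 (313/200) x (2208268177903629252103284231587187781611474747324221760036920062860225020577107645546857/343597383680000000000000000000000000000000000000000000000000000000000000000000000) ltac:(lra) ltac:(lia) ltac:(simpl; lra)).
pose proof (pow_le x 66 ltac:(lra)).
pose proof (pow_tail2 66 30 (313/200) x (691187939683835955908327964486789775644391595912481410891555979675250431440634693056166241/68719476736000000000000000000000000000000000000000000000000000000000000000000000000) ltac:(lra) ltac:(lia) ltac:(simpl; lra)).
lra. Qed.
Lemma mach_Phi2 x : 0 < x <= (313/200) -> x < PI/2 -> p_Phi2 x (sin x) (cos x) < 0.
Proof. intros Hx Hx2. destruct (trig_facts x ltac:(lra)) as (Hs & Hc & Hs0 & Hc0 & Hxb).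
pose proof (SL_nonneg x ltac:(lra)) as HSL.
pose proof (CL_nonneg x ltac:(lra)) as HCL.
pose proof (bnd_Phi2 x (sin x) (cos x) ltac:(lra) Hs Hc ltac:(lra) ltac:(lra) HSL HCL) as Hb.
pose proof (q_Phi2_sign (x^2) ltac:(split; nra)) as Hq.
pose proof (pow_lt x 12 ltac:(lra)) as Hm.
pose proof (Rmult_lt_0_compat _ _ Hm (Ropp_0_gt_lt_contravar _ Hq)). lra. Qed.

Definition p_Bnd1 (x s c : R) : R := (1)*(x^1*s^3*c^0) + (-1)*(x^2*s^2*c^1) + (2)*(x^2*s^0*c^1) + (-1)*(x^1*s^1*c^0) + (-12/5)*(x^0*s^2*c^1) + (14/5)*(x^1*s^1*c^2) + (-7/5)*(x^2*s^0*c^3).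
Definition q_Bnd1 (y:R) : R := (253968253968253/100000000000000000) + (-160846560846561/100000000000000000)*y^1 + (73913740580407/250000000000000000)*y^2 + (-28666090670059/1000000000000000000)*y^3 + (89542490749501/50000000000000000000)*y^4 + (-401047886614741/5000000000000000000000)*y^5 + (275416871467907/100000000000000000000000)*y^6 + (-188276993624751/2500000000000000000000000)*y^7 + (41491527236117/25000000000000000000000000)*y^8 + (-146659246799421/5000000000000000000000000000)*y^9.
Lemma q_Bnd1_sign y : 0 <= y <= (9/4) -> 0 < q_Bnd1 y.
Proof. intros [H0 H1]. unfold q_Bnd1.
destruct (Rle_lt_dec y (9/8)) as [Hy|Hy].
{ assert (Ht: 0 <= y - (0) <= (9/8)) by lra.
  pose proof (pw_bnd _ _ 1 Ht).
  pose proof (pw_bnd _ _ 2 Ht).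
  pose proof (pw_bnd _ _ 3 Ht).
  pose proof (pw_bnd _ _ 4 Ht).
  pose proof (pw_bnd _ _ 5 Ht).
  pose proof (pw_bnd _ _ 6 Ht).
  pose proof (pw_bnd _ _ 7 Ht).
  pose proof (pw_bnd _ _ 8 Ht).
  pose proof (pw_bnd _ _ 9 Ht).
  lra. }
assert (H0' : (9/8) <= y) by lra. clear H0 Hy. rename H0' into H0.
destruct (Rle_lt_dec y (27/16)) as [Hy|Hy].
{ assert (Ht: 0 <= y - (9/8) <= (9/16)) by lra.
  pose proof (pw_bnd _ _ 1 Ht).
  pose proof (pw_bnd _ _ 2 Ht).
  pose proof (pw_bnd _ _ 3 Ht).
  pose proof (pw_bnd _ _ 4 Ht).
  pose proof (pw_bnd _ _ 5 Ht).
  pose proof (pw_bnd _ _ 6 Ht).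
  pose proof (pw_bnd _ _ 7 Ht).
  pose proof (pw_bnd _ _ 8 Ht).
  pose proof (pw_bnd _ _ 9 Ht).
  lra. }
assert (H0' : (27/16) <= y) by lra. clear H0 Hy. rename H0' into H0.
{ assert (Ht: 0 <= y - (27/16) <= (9/16)) by lra.
  pose proof (pw_bnd _ _ 1 Ht).
  pose proof (pw_bnd _ _ 2 Ht).
  pose proof (pw_bnd _ _ 3 Ht).
  pose proof (pw_bnd _ _ 4 Ht).
  pose proof (pw_bnd _ _ 5 Ht).
  pose proof (pw_bnd _ _ 6 Ht).
  pose proof (pw_bnd _ _ 7 Ht).
  pose proof (pw_bnd _ _ 8 Ht).
  pose proof (pw_bnd _ _ 9 Ht).
  lra. }
Qed.
Lemma bnd_Bnd1 x s c : 0 <= x <= (3/2) -> SL x <= s <= SU x -> CL x <= c <= CU x -> 0 <= s -> 0 <= c -> 0 <= SL x -> 0 <= CL x -> p_Bnd1 x s c >= x^8 * q_Bnd1 (x^2).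
Proof. intros Hx Hs Hc Hs0 Hc0 HSL HCL. unfold p_Bnd1, q_Bnd1.
pose proof (mono_lo 1 3 0 x s c (SL x) (c) ltac:(lra) ltac:(lra) ltac:(lra)).
assert (x^1*(SL x)^3*(c)^0 = (1)*x^4 + (-1/2)*x^6 + (13/120)*x^8 + (-41/3024)*x^10 + (671/604800)*x^12 + (-73/1140480)*x^14 + (22991/8382528000)*x^16 + (-31/342144000)*x^18 + (5713/2414168064000)*x^20 + (-25121/506975293440000)*x^22 + (2069/2478545879040000)*x^24 + (-43/3824042213376000)*x^26 + (17173/144548795665612800000)*x^28 + (-13/13766551968153600000)*x^30 + (1/192731727554150400000)*x^32 + (-1/63601470092869632000000)*x^34) by (unfold SU, SL, CU, CL; field).
pose proof (mono_up 2 2 1 x s c (SU x) (CU x) ltac:(lra) ltac:(lra) ltac:(lra)).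
assert (x^2*(SU x)^2*(CU x)^1 = (1)*x^4 + (-5/6)*x^6 + (91/360)*x^8 + (-41/1008)*x^10 + (7381/1814400)*x^12 + (-949/3421440)*x^14 + (597871/43589145600)*x^16 + (-2669/5189184000)*x^18 + (1423879/94152554496000)*x^20 + (-336653/941525544960000)*x^22 + (1204211/173993920708608000)*x^24 + (-3307/29827529264332800)*x^26 + (4006267/2714305163054284800000)*x^28 + (-14471/888318053363220480000)*x^30 + (86521/586289915219725516800000)*x^32 + (-1049/977149858699542528000000)*x^34 + (19/3158786482000153804800000)*x^36 + (-37/1547805376180075364352000000)*x^38 + (1/18573664514160904372224000000)*x^40) by (unfold SU, SL, CU, CL; field).
pose proof (mono_lo 2 0 1 x s c (s) (CL x) ltac:(lra) ltac:(lra) ltac:(lra)).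
assert (x^2*(s)^0*(CL x)^1 = (1)*x^2 + (-1/2)*x^4 + (1/24)*x^6 + (-1/720)*x^8 + (1/40320)*x^10 + (-1/3628800)*x^12) by (unfold SU, SL, CU, CL; field).
pose proof (mono_up 1 1 0 x s c (SU x) (c) ltac:(lra) ltac:(lra) ltac:(lra)).
assert (x^1*(SU x)^1*(c)^0 = (1)*x^2 + (-1/6)*x^4 + (1/120)*x^6 + (-1/5040)*x^8 + (1/362880)*x^10 + (-1/39916800)*x^12 + (1/6227020800)*x^14) by (unfold SU, SL, CU, CL; field).
pose proof (mono_up 0 2 1 x s c (SU x) (CU x) ltac:(lra) ltac:(lra) ltac:(lra)).
assert (x^0*(SU x)^2*(CU x)^1 = (1)*x^2 + (-5/6)*x^4 + (91/360)*x^6 + (-41/1008)*x^8 + (7381/1814400)*x^10 + (-949/3421440)*x^12 + (597871/43589145600)*x^14 + (-2669/5189184000)*x^16 + (1423879/94152554496000)*x^18 + (-336653/941525544960000)*x^20 + (1204211/173993920708608000)*x^22 + (-3307/29827529264332800)*x^24 + (4006267/2714305163054284800000)*x^26 + (-14471/888318053363220480000)*x^28 + (86521/586289915219725516800000)*x^30 + (-1049/977149858699542528000000)*x^32 + (19/3158786482000153804800000)*x^34 + (-37/1547805376180075364352000000)*x^36 + (1/18573664514160904372224000000)*x^38) by (unfold SU, SL, CU, CL; field).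
pose proof (mono_lo 1 1 2 x s c (SL x) (CL x) ltac:(lra) ltac:(lra) ltac:(lra)).
assert (x^1*(SL x)^1*(CL x)^2 = (1)*x^2 + (-7/6)*x^4 + (61/120)*x^6 + (-547/5040)*x^8 + (703/51840)*x^10 + (-44287/39916800)*x^12 + (15329/239500800)*x^14 + (-137821/50295168000)*x^16 + (72539/804722688000)*x^18 + (-33679/14485008384000)*x^20 + (13729/289700167680000)*x^22 + (-617/811160469504000)*x^24 + (13799/1460088845107200000)*x^26 + (-17/194678512680960000)*x^28 + (29/52563198423859200000)*x^30 + (-1/525631984238592000000)*x^32) by (unfold SU, SL, CU, CL; field).
pose proof (mono_up 2 0 3 x s c (s) (CU x) ltac:(lra) ltac:(lra) ltac:(lra)).
assert (x^2*(s)^0*(CU x)^3 = (1)*x^2 + (-3/2)*x^4 + (7/8)*x^6 + (-61/240)*x^8 + (547/13440)*x^10 + (-703/172800)*x^12 + (44287/159667200)*x^14 + (-73/5322240)*x^16 + (15329/29804544000)*x^18 + (-24329/1609445376000)*x^20 + (703/1970749440000)*x^22 + (-3977/579400335360000)*x^24 + (116141/1070731819745280000)*x^26 + (-5021/3569106065817600000)*x^28 + (1907/128487818369433600000)*x^30 + (-103/825993118089216000000)*x^32 + (37/46255614612996096000000)*x^34 + (-1/277533687677976576000000)*x^36 + (1/109903340320478724096000000)*x^38) by (unfold SU, SL, CU, CL; field).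
pose proof (pow_le x 1 ltac:(lra)).
pose proof (pow_le x 2 ltac:(lra)).
pose proof (pow_le x 3 ltac:(lra)).
pose proof (pow_le x 4 ltac:(lra)).
pose proof (pow_le x 5 ltac:(lra)).
pose proof (pow_le x 6 ltac:(lra)).
pose proof (pow_le x 7 ltac:(lra)).
pose proof (pow_le x 8 ltac:(lra)).
pose proof (pow_le x 9 ltac:(lra)).
pose proof (pow_le x 10 ltac:(lra)).
pose proof (pow_le x 11 ltac:(lra)).
pose proof (pow_le x 12 ltac:(lra)).
pose proof (pow_le x 13 ltac:(lra)).
pose proof (pow_le x 14 ltac:(lra)).
pose proof (pow_le x 15 ltac:(lra)).
pose proof (pow_le x 16 ltac:(lra)).
pose proof (pow_le x 17 ltac:(lra)).
pose proof (pow_le x 18 ltac:(lra)).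
pose proof (pow_le x 19 ltac:(lra)).
pose proof (pow_le x 20 ltac:(lra)).
pose proof (pow_le x 21 ltac:(lra)).
pose proof (pow_le x 22 ltac:(lra)).
pose proof (pow_le x 23 ltac:(lra)).
pose proof (pow_le x 24 ltac:(lra)).
pose proof (pow_le x 25 ltac:(lra)).
pose proof (pow_le x 26 ltac:(lra)).
pose proof (pow_le x 27 ltac:(lra)).
pose proof (pow_tail2 27 26 (3/2) x (3/2) ltac:(lra) ltac:(lia) ltac:(simpl; lra)).
pose proof (pow_le x 28 ltac:(lra)).
pose proof (pow_tail2 28 26 (3/2) x (9/4) ltac:(lra) ltac:(lia) ltac:(simpl; lra)).
pose proof (pow_le x 29 ltac:(lra)).
pose proof (pow_tail2 29 26 (3/2) x (27/8) ltac:(lra) ltac:(lia) ltac:(simpl; lra)).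
pose proof (pow_le x 30 ltac:(lra)).
pose proof (pow_tail2 30 26 (3/2) x (81/16) ltac:(lra) ltac:(lia) ltac:(simpl; lra)).
pose proof (pow_le x 31 ltac:(lra)).
pose proof (pow_tail2 31 26 (3/2) x (243/32) ltac:(lra) ltac:(lia) ltac:(simpl; lra)).
pose proof (pow_le x 32 ltac:(lra)).
pose proof (pow_tail2 32 26 (3/2) x (729/64) ltac:(lra) ltac:(lia) ltac:(simpl; lra)).
pose proof (pow_le x 33 ltac:(lra)).
pose proof (pow_tail2 33 26 (3/2) x (2187/128) ltac:(lra) ltac:(lia) ltac:(simpl; lra)).
pose proof (pow_le x 34 ltac:(lra)).
pose proof (pow_tail2 34 26 (3/2) x (6561/256) ltac:(lra) ltac:(lia) ltac:(simpl; lra)).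
pose proof (pow_le x 35 ltac:(lra)).
pose proof (pow_tail2 35 26 (3/2) x (19683/512) ltac:(lra) ltac:(lia) ltac:(simpl; lra)).
pose proof (pow_le x 36 ltac:(lra)).
pose proof (pow_tail2 36 26 (3/2) x (59049/1024) ltac:(lra) ltac:(lia) ltac:(simpl; lra)).
pose proof (pow_le x 37 ltac:(lra)).
pose proof (pow_tail2 37 26 (3/2) x (177147/2048) ltac:(lra) ltac:(lia) ltac:(simpl; lra)).
pose proof (pow_le x 38 ltac:(lra)).
pose proof (pow_tail2 38 26 (3/2) x (531441/4096) ltac:(lra) ltac:(lia) ltac:(simpl; lra)).
pose proof (pow_le x 39 ltac:(lra)).
pose proof (pow_tail2 39 26 (3/2) x (1594323/8192) ltac:(lra) ltac:(lia) ltac:(simpl; lra)).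
pose proof (pow_le x 40 ltac:(lra)).
pose proof (pow_tail2 40 26 (3/2) x (4782969/16384) ltac:(lra) ltac:(lia) ltac:(simpl; lra)).
lra. Qed.
Lemma mach_Bnd1 x : 0 < x <= (3/2) -> x < PI/2 -> 0 < p_Bnd1 x (sin x) (cos x).
Proof. intros Hx Hx2. destruct (trig_facts x ltac:(lra)) as (Hs & Hc & Hs0 & Hc0 & Hxb).
pose proof (SL_nonneg x ltac:(lra)) as HSL.
pose proof (CL_nonneg x ltac:(lra)) as HCL.
pose proof (bnd_Bnd1 x (sin x) (cos x) ltac:(lra) Hs Hc ltac:(lra) ltac:(lra) HSL HCL) as Hb.
pose proof (q_Bnd1_sign (x^2) ltac:(split; nra)) as Hq.
pose proof (pow_lt x 8 ltac:(lra)) as Hm.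
pose proof (Rmult_lt_0_compat _ _ Hm Hq). lra. Qed.

Definition p_Bnd2 (x s c : R) : R := (1)*(x^1*s^3*c^0) + (-1)*(x^2*s^2*c^1) + (-3)*(x^0*s^2*c^1) + (6)*(x^1*s^1*c^2) + (-3)*(x^2*s^0*c^3).
Definition q_Bnd2 (y:R) : R := (111111111111111/1250000000000000) + (-258201058201059/10000000000000000)*y^1 + (21384479717813/6250000000000000)*y^2 + (-275875974040657/1000000000000000000)*y^3 + (76381607259583/5000000000000000000)*y^4 + (-623738360731307/1000000000000000000000)*y^5 + (2464328251549/125000000000000000000)*y^6 + (-498561529315021/1000000000000000000000000)*y^7 + (102745290911279/10000000000000000000000000)*y^8 + (-86818372341661/500000000000000000000000000)*y^9.
Lemma q_Bnd2_sign y : 0 <= y <= (9/4) -> 0 < q_Bnd2 y.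
Proof. intros [H0 H1]. unfold q_Bnd2.
{ assert (Ht: 0 <= y - (0) <= (9/4)) by lra.
  pose proof (pw_bnd _ _ 1 Ht).
  pose proof (pw_bnd _ _ 2 Ht).
  pose proof (pw_bnd _ _ 3 Ht).
  pose proof (pw_bnd _ _ 4 Ht).
  pose proof (pw_bnd _ _ 5 Ht).
  pose proof (pw_bnd _ _ 6 Ht).
  pose proof (pw_bnd _ _ 7 Ht).
  pose proof (pw_bnd _ _ 8 Ht).
  pose proof (pw_bnd _ _ 9 Ht).
  lra. }
Qed.
Lemma bnd_Bnd2 x s c : 0 <= x <= (3/2) -> SL x <= s <= SU x -> CL x <= c <= CU x -> 0 <= s -> 0 <= c -> 0 <= SL x -> 0 <= CL x -> p_Bnd2 x s c >= x^8 * q_Bnd2 (x^2).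
Proof. intros Hx Hs Hc Hs0 Hc0 HSL HCL. unfold p_Bnd2, q_Bnd2.
pose proof (mono_lo 1 3 0 x s c (SL x) (c) ltac:(lra) ltac:(lra) ltac:(lra)).
assert (x^1*(SL x)^3*(c)^0 = (1)*x^4 + (-1/2)*x^6 + (13/120)*x^8 + (-41/3024)*x^10 + (671/604800)*x^12 + (-73/1140480)*x^14 + (22991/8382528000)*x^16 + (-31/342144000)*x^18 + (5713/2414168064000)*x^20 + (-25121/506975293440000)*x^22 + (2069/2478545879040000)*x^24 + (-43/3824042213376000)*x^26 + (17173/144548795665612800000)*x^28 + (-13/13766551968153600000)*x^30 + (1/192731727554150400000)*x^32 + (-1/63601470092869632000000)*x^34) by (unfold SU, SL, CU, CL; field).
pose proof (mono_up 2 2 1 x s c (SU x) (CU x) ltac:(lra) ltac:(lra) ltac:(lra)).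
assert (x^2*(SU x)^2*(CU x)^1 = (1)*x^4 + (-5/6)*x^6 + (91/360)*x^8 + (-41/1008)*x^10 + (7381/1814400)*x^12 + (-949/3421440)*x^14 + (597871/43589145600)*x^16 + (-2669/5189184000)*x^18 + (1423879/94152554496000)*x^20 + (-336653/941525544960000)*x^22 + (1204211/173993920708608000)*x^24 + (-3307/29827529264332800)*x^26 + (4006267/2714305163054284800000)*x^28 + (-14471/888318053363220480000)*x^30 + (86521/586289915219725516800000)*x^32 + (-1049/977149858699542528000000)*x^34 + (19/3158786482000153804800000)*x^36 + (-37/1547805376180075364352000000)*x^38 + (1/18573664514160904372224000000)*x^40) by (unfold SU, SL, CU, CL; field).
pose proof (mono_up 0 2 1 x s c (SU x) (CU x) ltac:(lra) ltac:(lra) ltac:(lra)).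
assert (x^0*(SU x)^2*(CU x)^1 = (1)*x^2 + (-5/6)*x^4 + (91/360)*x^6 + (-41/1008)*x^8 + (7381/1814400)*x^10 + (-949/3421440)*x^12 + (597871/43589145600)*x^14 + (-2669/5189184000)*x^16 + (1423879/94152554496000)*x^18 + (-336653/941525544960000)*x^20 + (1204211/173993920708608000)*x^22 + (-3307/29827529264332800)*x^24 + (4006267/2714305163054284800000)*x^26 + (-14471/888318053363220480000)*x^28 + (86521/586289915219725516800000)*x^30 + (-1049/977149858699542528000000)*x^32 + (19/3158786482000153804800000)*x^34 + (-37/1547805376180075364352000000)*x^36 + (1/18573664514160904372224000000)*x^38) by (unfold SU, SL, CU, CL; field).
pose proof (mono_lo 1 1 2 x s c (SL x) (CL x) ltac:(lra) ltac:(lra) ltac:(lra)).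
assert (x^1*(SL x)^1*(CL x)^2 = (1)*x^2 + (-7/6)*x^4 + (61/120)*x^6 + (-547/5040)*x^8 + (703/51840)*x^10 + (-44287/39916800)*x^12 + (15329/239500800)*x^14 + (-137821/50295168000)*x^16 + (72539/804722688000)*x^18 + (-33679/14485008384000)*x^20 + (13729/289700167680000)*x^22 + (-617/811160469504000)*x^24 + (13799/1460088845107200000)*x^26 + (-17/194678512680960000)*x^28 + (29/52563198423859200000)*x^30 + (-1/525631984238592000000)*x^32) by (unfold SU, SL, CU, CL; field).
pose proof (mono_up 2 0 3 x s c (s) (CU x) ltac:(lra) ltac:(lra) ltac:(lra)).
assert (x^2*(s)^0*(CU x)^3 = (1)*x^2 + (-3/2)*x^4 + (7/8)*x^6 + (-61/240)*x^8 + (547/13440)*x^10 + (-703/172800)*x^12 + (44287/159667200)*x^14 + (-73/5322240)*x^16 + (15329/29804544000)*x^18 + (-24329/1609445376000)*x^20 + (703/1970749440000)*x^22 + (-3977/579400335360000)*x^24 + (116141/1070731819745280000)*x^26 + (-5021/3569106065817600000)*x^28 + (1907/128487818369433600000)*x^30 + (-103/825993118089216000000)*x^32 + (37/46255614612996096000000)*x^34 + (-1/277533687677976576000000)*x^36 + (1/109903340320478724096000000)*x^38) by (unfold SU, SL, CU, CL; field).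
pose proof (pow_le x 1 ltac:(lra)).
pose proof (pow_le x 2 ltac:(lra)).
pose proof (pow_le x 3 ltac:(lra)).
pose proof (pow_le x 4 ltac:(lra)).
pose proof (pow_le x 5 ltac:(lra)).
pose proof (pow_le x 6 ltac:(lra)).
pose proof (pow_le x 7 ltac:(lra)).
pose proof (pow_le x 8 ltac:(lra)).
pose proof (pow_le x 9 ltac:(lra)).
pose proof (pow_le x 10 ltac:(lra)).
pose proof (pow_le x 11 ltac:(lra)).
pose proof (pow_le x 12 ltac:(lra)).
pose proof (pow_le x 13 ltac:(lra)).
pose proof (pow_le x 14 ltac:(lra)).
pose proof (pow_le x 15 ltac:(lra)).
pose proof (pow_le x 16 ltac:(lra)).
pose proof (pow_le x 17 ltac:(lra)).
pose proof (pow_le x 18 ltac:(lra)).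
pose proof (pow_le x 19 ltac:(lra)).
pose proof (pow_le x 20 ltac:(lra)).
pose proof (pow_le x 21 ltac:(lra)).
pose proof (pow_le x 22 ltac:(lra)).
pose proof (pow_le x 23 ltac:(lra)).
pose proof (pow_le x 24 ltac:(lra)).
pose proof (pow_le x 25 ltac:(lra)).
pose proof (pow_le x 26 ltac:(lra)).
pose proof (pow_le x 27 ltac:(lra)).
pose proof (pow_tail2 27 26 (3/2) x (3/2) ltac:(lra) ltac:(lia) ltac:(simpl; lra)).
pose proof (pow_le x 28 ltac:(lra)).
pose proof (pow_tail2 28 26 (3/2) x (9/4) ltac:(lra) ltac:(lia) ltac:(simpl; lra)).
pose proof (pow_le x 29 ltac:(lra)).
pose proof (pow_tail2 29 26 (3/2) x (27/8) ltac:(lra) ltac:(lia) ltac:(simpl; lra)).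
pose proof (pow_le x 30 ltac:(lra)).
pose proof (pow_tail2 30 26 (3/2) x (81/16) ltac:(lra) ltac:(lia) ltac:(simpl; lra)).
pose proof (pow_le x 31 ltac:(lra)).
pose proof (pow_tail2 31 26 (3/2) x (243/32) ltac:(lra) ltac:(lia) ltac:(simpl; lra)).
pose proof (pow_le x 32 ltac:(lra)).
pose proof (pow_tail2 32 26 (3/2) x (729/64) ltac:(lra) ltac:(lia) ltac:(simpl; lra)).
pose proof (pow_le x 33 ltac:(lra)).
pose proof (pow_tail2 33 26 (3/2) x (2187/128) ltac:(lra) ltac:(lia) ltac:(simpl; lra)).
pose proof (pow_le x 34 ltac:(lra)).
pose proof (pow_tail2 34 26 (3/2) x (6561/256) ltac:(lra) ltac:(lia) ltac:(simpl; lra)).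
pose proof (pow_le x 35 ltac:(lra)).
pose proof (pow_tail2 35 26 (3/2) x (19683/512) ltac:(lra) ltac:(lia) ltac:(simpl; lra)).
pose proof (pow_le x 36 ltac:(lra)).
pose proof (pow_tail2 36 26 (3/2) x (59049/1024) ltac:(lra) ltac:(lia) ltac:(simpl; lra)).
pose proof (pow_le x 37 ltac:(lra)).
pose proof (pow_tail2 37 26 (3/2) x (177147/2048) ltac:(lra) ltac:(lia) ltac:(simpl; lra)).
pose proof (pow_le x 38 ltac:(lra)).
pose proof (pow_tail2 38 26 (3/2) x (531441/4096) ltac:(lra) ltac:(lia) ltac:(simpl; lra)).
pose proof (pow_le x 39 ltac:(lra)).
pose proof (pow_tail2 39 26 (3/2) x (1594323/8192) ltac:(lra) ltac:(lia) ltac:(simpl; lra)).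
pose proof (pow_le x 40 ltac:(lra)).
pose proof (pow_tail2 40 26 (3/2) x (4782969/16384) ltac:(lra) ltac:(lia) ltac:(simpl; lra)).
lra. Qed.
Lemma mach_Bnd2 x : 0 < x <= (3/2) -> x < PI/2 -> 0 < p_Bnd2 x (sin x) (cos x).
Proof. intros Hx Hx2. destruct (trig_facts x ltac:(lra)) as (Hs & Hc & Hs0 & Hc0 & Hxb).
pose proof (SL_nonneg x ltac:(lra)) as HSL.
pose proof (CL_nonneg x ltac:(lra)) as HCL.
pose proof (bnd_Bnd2 x (sin x) (cos x) ltac:(lra) Hs Hc ltac:(lra) ltac:(lra) HSL HCL) as Hb.
pose proof (q_Bnd2_sign (x^2) ltac:(split; nra)) as Hq.
pose proof (pow_lt x 8 ltac:(lra)) as Hm.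
pose proof (Rmult_lt_0_compat _ _ Hm Hq). lra. Qed.

Definition p_Bnd3 (x s c : R) : R := (34/35)*(x^1*s^3*c^0) + (-34/35)*(x^2*s^2*c^1) + (2)*(x^2*s^0*c^1) + (-1)*(x^1*s^1*c^0) + (-81/35)*(x^0*s^2*c^1) + (92/35)*(x^1*s^1*c^2) + (-46/35)*(x^2*s^0*c^3).
Definition q_Bnd3 (y:R) : R := (-870748299319727/1000000000000000000) + (49474335188621/250000000000000000)*y^1 + (-207543805191197/10000000000000000000)*y^2 + (66955758034273/50000000000000000000)*y^3 + (-293833922793319/5000000000000000000000)*y^4 + (179468320828839/100000000000000000000000)*y^5 + (-365318152486451/10000000000000000000000000)*y^6 + (9903822625259/25000000000000000000000000)*y^7 + (10499166085739/5000000000000000000000000000)*y^8 + (-169672134738547/1000000000000000000000000000000)*y^9.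
Lemma q_Bnd3_sign y : 0 <= y <= (9/4) -> q_Bnd3 y < 0.
Proof. intros [H0 H1]. unfold q_Bnd3.
{ assert (Ht: 0 <= y - (0) <= (9/4)) by lra.
  pose proof (pw_bnd _ _ 1 Ht).
  pose proof (pw_bnd _ _ 2 Ht).
  pose proof (pw_bnd _ _ 3 Ht).
  pose proof (pw_bnd _ _ 4 Ht).
  pose proof (pw_bnd _ _ 5 Ht).
  pose proof (pw_bnd _ _ 6 Ht).
  pose proof (pw_bnd _ _ 7 Ht).
  pose proof (pw_bnd _ _ 8 Ht).
  pose proof (pw_bnd _ _ 9 Ht).
  lra. }
Qed.
Lemma bnd_Bnd3 x s c : 0 <= x <= (3/2) -> SL x <= s <= SU x -> CL x <= c <= CU x -> 0 <= s -> 0 <= c -> 0 <= SL x -> 0 <= CL x -> p_Bnd3 x s c <= x^10 * q_Bnd3 (x^2).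
Proof. intros Hx Hs Hc Hs0 Hc0 HSL HCL. unfold p_Bnd3, q_Bnd3.
pose proof (mono_up 1 3 0 x s c (SU x) (c) ltac:(lra) ltac:(lra) ltac:(lra)).
assert (x^1*(SU x)^3*(c)^0 = (1)*x^4 + (-1/2)*x^6 + (13/120)*x^8 + (-41/3024)*x^10 + (671/604800)*x^12 + (-73/1140480)*x^14 + (597871/217945728000)*x^16 + (-157/1729728000)*x^18 + (74941/31384184832000)*x^20 + (-336653/6590678814720000)*x^22 + (52357/57997973569536000)*x^24 + (-3307/248562743869440000)*x^26 + (4006267/24428746467488563200000)*x^28 + (-499/296106017787740160000)*x^30 + (2791/195429971739908505600000)*x^32 + (-1049/10748648445694967808000000)*x^34 + (19/36852508956668461056000000)*x^36 + (-1/515935125393358454784000000)*x^38 + (1/241457638684091756838912000000)*x^40) by (unfold SU, SL, CU, CL; field).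
pose proof (mono_lo 2 2 1 x s c (SL x) (CL x) ltac:(lra) ltac:(lra) ltac:(lra)).
assert (x^2*(SL x)^2*(CL x)^1 = (1)*x^4 + (-5/6)*x^6 + (91/360)*x^8 + (-41/1008)*x^10 + (7381/1814400)*x^12 + (-949/3421440)*x^14 + (22991/1676505600)*x^16 + (-527/1026432000)*x^18 + (108547/7242504192000)*x^20 + (-25121/72425041920000)*x^22 + (47587/7435637637120000)*x^24 + (-43/458885065605120)*x^26 + (17173/16060977296179200000)*x^28 + (-377/41299655904460800000)*x^30 + (31/578195182662451200000)*x^32 + (-1/5781951826624512000000)*x^34) by (unfold SU, SL, CU, CL; field).
pose proof (mono_up 2 0 1 x s c (s) (CU x) ltac:(lra) ltac:(lra) ltac:(lra)).
assert (x^2*(s)^0*(CU x)^1 = (1)*x^2 + (-1/2)*x^4 + (1/24)*x^6 + (-1/720)*x^8 + (1/40320)*x^10 + (-1/3628800)*x^12 + (1/479001600)*x^14) by (unfold SU, SL, CU, CL; field).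
pose proof (mono_lo 1 1 0 x s c (SL x) (c) ltac:(lra) ltac:(lra) ltac:(lra)).
assert (x^1*(SL x)^1*(c)^0 = (1)*x^2 + (-1/6)*x^4 + (1/120)*x^6 + (-1/5040)*x^8 + (1/362880)*x^10 + (-1/39916800)*x^12) by (unfold SU, SL, CU, CL; field).
pose proof (mono_lo 0 2 1 x s c (SL x) (CL x) ltac:(lra) ltac:(lra) ltac:(lra)).
assert (x^0*(SL x)^2*(CL x)^1 = (1)*x^2 + (-5/6)*x^4 + (91/360)*x^6 + (-41/1008)*x^8 + (7381/1814400)*x^10 + (-949/3421440)*x^12 + (22991/1676505600)*x^14 + (-527/1026432000)*x^16 + (108547/7242504192000)*x^18 + (-25121/72425041920000)*x^20 + (47587/7435637637120000)*x^22 + (-43/458885065605120)*x^24 + (17173/16060977296179200000)*x^26 + (-377/41299655904460800000)*x^28 + (31/578195182662451200000)*x^30 + (-1/5781951826624512000000)*x^32) by (unfold SU, SL, CU, CL; field).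
pose proof (mono_up 1 1 2 x s c (SU x) (CU x) ltac:(lra) ltac:(lra) ltac:(lra)).
assert (x^1*(SU x)^1*(CU x)^2 = (1)*x^2 + (-7/6)*x^4 + (61/120)*x^6 + (-547/5040)*x^8 + (703/51840)*x^10 + (-44287/39916800)*x^12 + (398581/6227020800)*x^14 + (-298933/108972864000)*x^16 + (949391/10461394944000)*x^18 + (-12833/5380145971200)*x^20 + (574471/11298306539520000)*x^22 + (-516419/579979735695360000)*x^24 + (2689007/208792704850329600000)*x^26 + (-27491/178965175585996800000)*x^28 + (22499/15033074749223731200000)*x^30 + (-239/20499647385305088000000)*x^32 + (29/416300531516964864000000)*x^34 + (-1/3401770057538627174400000)*x^36 + (1/1428743424166223413248000000)*x^38) by (unfold SU, SL, CU, CL; field).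
pose proof (mono_lo 2 0 3 x s c (s) (CL x) ltac:(lra) ltac:(lra) ltac:(lra)).
assert (x^2*(s)^0*(CL x)^3 = (1)*x^2 + (-3/2)*x^4 + (7/8)*x^6 + (-61/240)*x^8 + (547/13440)*x^10 + (-703/172800)*x^12 + (671/2419200)*x^14 + (-199/14515200)*x^16 + (12491/24385536000)*x^18 + (-2171/146313216000)*x^20 + (2957/8778792960000)*x^22 + (-1/167215104000)*x^24 + (241/2949674434560000)*x^26 + (-73/88490233036800000)*x^28 + (1/176980466073600000)*x^30 + (-1/47784725839872000000)*x^32) by (unfold SU, SL, CU, CL; field).
pose proof (pow_le x 1 ltac:(lra)).
pose proof (pow_le x 2 ltac:(lra)).
pose proof (pow_le x 3 ltac:(lra)).
pose proof (pow_le x 4 ltac:(lra)).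
pose proof (pow_le x 5 ltac:(lra)).
pose proof (pow_le x 6 ltac:(lra)).
pose proof (pow_le x 7 ltac:(lra)).
pose proof (pow_le x 8 ltac:(lra)).
pose proof (pow_le x 9 ltac:(lra)).
pose proof (pow_le x 10 ltac:(lra)).
pose proof (pow_le x 11 ltac:(lra)).
pose proof (pow_le x 12 ltac:(lra)).
pose proof (pow_le x 13 ltac:(lra)).
pose proof (pow_le x 14 ltac:(lra)).
pose proof (pow_le x 15 ltac:(lra)).
pose proof (pow_le x 16 ltac:(lra)).
pose proof (pow_le x 17 ltac:(lra)).
pose proof (pow_le x 18 ltac:(lra)).
pose proof (pow_le x 19 ltac:(lra)).
pose proof (pow_le x 20 ltac:(lra)).
pose proof (pow_le x 21 ltac:(lra)).
pose proof (pow_le x 22 ltac:(lra)).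
pose proof (pow_le x 23 ltac:(lra)).
pose proof (pow_le x 24 ltac:(lra)).
pose proof (pow_le x 25 ltac:(lra)).
pose proof (pow_le x 26 ltac:(lra)).
pose proof (pow_le x 27 ltac:(lra)).
pose proof (pow_le x 28 ltac:(lra)).
pose proof (pow_le x 29 ltac:(lra)).
pose proof (pow_tail2 29 28 (3/2) x (3/2) ltac:(lra) ltac:(lia) ltac:(simpl; lra)).
pose proof (pow_le x 30 ltac:(lra)).
pose proof (pow_tail2 30 28 (3/2) x (9/4) ltac:(lra) ltac:(lia) ltac:(simpl; lra)).
pose proof (pow_le x 31 ltac:(lra)).
pose proof (pow_tail2 31 28 (3/2) x (27/8) ltac:(lra) ltac:(lia) ltac:(simpl; lra)).
pose proof (pow_le x 32 ltac:(lra)).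
pose proof (pow_tail2 32 28 (3/2) x (81/16) ltac:(lra) ltac:(lia) ltac:(simpl; lra)).
pose proof (pow_le x 33 ltac:(lra)).
pose proof (pow_tail2 33 28 (3/2) x (243/32) ltac:(lra) ltac:(lia) ltac:(simpl; lra)).
pose proof (pow_le x 34 ltac:(lra)).
pose proof (pow_tail2 34 28 (3/2) x (729/64) ltac:(lra) ltac:(lia) ltac:(simpl; lra)).
pose proof (pow_le x 35 ltac:(lra)).
pose proof (pow_tail2 35 28 (3/2) x (2187/128) ltac:(lra) ltac:(lia) ltac:(simpl; lra)).
pose proof (pow_le x 36 ltac:(lra)).
pose proof (pow_tail2 36 28 (3/2) x (6561/256) ltac:(lra) ltac:(lia) ltac:(simpl; lra)).
pose proof (pow_le x 37 ltac:(lra)).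
pose proof (pow_tail2 37 28 (3/2) x (19683/512) ltac:(lra) ltac:(lia) ltac:(simpl; lra)).
pose proof (pow_le x 38 ltac:(lra)).
pose proof (pow_tail2 38 28 (3/2) x (59049/1024) ltac:(lra) ltac:(lia) ltac:(simpl; lra)).
pose proof (pow_le x 39 ltac:(lra)).
pose proof (pow_tail2 39 28 (3/2) x (177147/2048) ltac:(lra) ltac:(lia) ltac:(simpl; lra)).
pose proof (pow_le x 40 ltac:(lra)).
pose proof (pow_tail2 40 28 (3/2) x (531441/4096) ltac:(lra) ltac:(lia) ltac:(simpl; lra)).
lra. Qed.
Lemma mach_Bnd3 x : 0 < x <= (3/2) -> x < PI/2 -> p_Bnd3 x (sin x) (cos x) < 0.
Proof. intros Hx Hx2. destruct (trig_facts x ltac:(lra)) as (Hs & Hc & Hs0 & Hc0 & Hxb).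
pose proof (SL_nonneg x ltac:(lra)) as HSL.
pose proof (CL_nonneg x ltac:(lra)) as HCL.
pose proof (bnd_Bnd3 x (sin x) (cos x) ltac:(lra) Hs Hc ltac:(lra) ltac:(lra) HSL HCL) as Hb.
pose proof (q_Bnd3_sign (x^2) ltac:(split; nra)) as Hq.
pose proof (pow_lt x 10 ltac:(lra)) as Hm.
pose proof (Rmult_lt_0_compat _ _ Hm (Ropp_0_gt_lt_contravar _ Hq)). lra. Qed.

Lemma crude_PhiE x s c : 313/200 <= x <= 15708/10000 -> 99996/100000 <= s <= 1 -> 0 <= c <= 58/10000 -> 0 < p_PhiE x s c.
Proof. intros Hx Hs Hc. unfold p_PhiE.
pose proof (mono_lo2 0 2 1 x s c (313/200) (99996/100000) 0 ltac:(lra) ltac:(lra) ltac:(lra)).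
pose proof (mono_lo2 1 1 2 x s c (313/200) (99996/100000) 0 ltac:(lra) ltac:(lra) ltac:(lra)).
pose proof (mono_lo2 1 3 0 x s c (313/200) (99996/100000) 0 ltac:(lra) ltac:(lra) ltac:(lra)).
pose proof (mono_up2 2 0 3 x s c (15708/10000) 1 (58/10000) ltac:(lra) ltac:(lra) ltac:(lra)).
pose proof (mono_up2 2 2 1 x s c (15708/10000) 1 (58/10000) ltac:(lra) ltac:(lra) ltac:(lra)).
lra. Qed.
Lemma crude_Phi1 x s c : 313/200 <= x <= 15708/10000 -> 99996/100000 <= s <= 1 -> 0 <= c <= 58/10000 -> 0 < p_Phi1 x s c.
Proof. intros Hx Hs Hc. unfold p_Phi1.
pose proof (mono_up2 0 2 1 x s c (15708/10000) 1 (58/10000) ltac:(lra) ltac:(lra) ltac:(lra)).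
pose proof (mono_lo2 1 1 2 x s c (313/200) (99996/100000) 0 ltac:(lra) ltac:(lra) ltac:(lra)).
pose proof (mono_lo2 1 3 0 x s c (313/200) (99996/100000) 0 ltac:(lra) ltac:(lra) ltac:(lra)).
pose proof (mono_up2 2 0 3 x s c (15708/10000) 1 (58/10000) ltac:(lra) ltac:(lra) ltac:(lra)).
pose proof (mono_up2 2 2 1 x s c (15708/10000) 1 (58/10000) ltac:(lra) ltac:(lra) ltac:(lra)).
pose proof (mono_up2 3 1 2 x s c (15708/10000) 1 (58/10000) ltac:(lra) ltac:(lra) ltac:(lra)).
pose proof (mono_up2 3 3 0 x s c (15708/10000) 1 (58/10000) ltac:(lra) ltac:(lra) ltac:(lra)).
lra. Qed.
Lemma crude_Phi2 x s c : 313/200 <= x <= 15708/10000 -> 99996/100000 <= s <= 1 -> 0 <= c <= 58/10000 -> p_Phi2 x s c < 0.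
Proof. intros Hx Hs Hc. unfold p_Phi2.
pose proof (mono_lo2 0 2 3 x s c (313/200) (99996/100000) 0 ltac:(lra) ltac:(lra) ltac:(lra)).
pose proof (mono_lo2 0 4 1 x s c (313/200) (99996/100000) 0 ltac:(lra) ltac:(lra) ltac:(lra)).
pose proof (mono_up2 1 1 4 x s c (15708/10000) 1 (58/10000) ltac:(lra) ltac:(lra) ltac:(lra)).
pose proof (mono_up2 1 3 2 x s c (15708/10000) 1 (58/10000) ltac:(lra) ltac:(lra) ltac:(lra)).
pose proof (mono_lo2 1 5 0 x s c (313/200) (99996/100000) 0 ltac:(lra) ltac:(lra) ltac:(lra)).
pose proof (mono_lo2 2 0 5 x s c (313/200) (99996/100000) 0 ltac:(lra) ltac:(lra) ltac:(lra)).
pose proof (mono_lo2 2 2 3 x s c (313/200) (99996/100000) 0 ltac:(lra) ltac:(lra) ltac:(lra)).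
pose proof (mono_up2 2 4 1 x s c (15708/10000) 1 (58/10000) ltac:(lra) ltac:(lra) ltac:(lra)).
pose proof (mono_lo2 3 1 4 x s c (313/200) (99996/100000) 0 ltac:(lra) ltac:(lra) ltac:(lra)).
pose proof (mono_lo2 3 3 2 x s c (313/200) (99996/100000) 0 ltac:(lra) ltac:(lra) ltac:(lra)).
lra. Qed.
Lemma region_facts x : 313/200 <= x < PI/2 -> 99996/100000 <= sin x <= 1 /\ 0 <= cos x <= 58/10000.
Proof. intros Hx. pose proof PI_ub. pose proof PI2_lb.
 assert (Hc1 : cos x <= cos (313/200)).
 { destruct (Req_dec x (313/200)) as [->|Hne]. lra. left. apply cos_decreasing_1; lra. }
 assert (Hc2 : cos (313/200) <= CU (313/200)) by (apply cos_bnd; lra).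
 assert (Hc3 : CU (313/200) <= 58/10000) by (unfold CU, CL; lra).
 assert (Hc0 : 0 <= cos x) by (apply cos_ge_0; lra).
 assert (Hs0 : 0 <= sin x) by (apply sin_ge_0; lra).
 assert (Hs1 : sin x <= 1) by (apply SIN_bound).
 pose proof (sin2_cos2 x) as Hp. unfold Rsqr in Hp.
 split; [split|split]; try lra. nra. Qed.

Lemma PhiE_pos x : 0 < x < PI/2 -> 0 < p_PhiE x (sin x) (cos x).
Proof. intros Hx. destruct (Rle_lt_dec x (313/200)).
 - apply mach_PhiE; lra.
 - pose proof PI_ub. destruct (region_facts x ltac:(lra)). apply crude_PhiE; lra. Qed.
Lemma Phi1_pos x : 0 < x < PI/2 -> 0 < p_Phi1 x (sin x) (cos x).
Proof. intros Hx. destruct (Rle_lt_dec x (313/200)).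
 - apply mach_Phi1; lra.
 - pose proof PI_ub. destruct (region_facts x ltac:(lra)). apply crude_Phi1; lra. Qed.
Lemma Phi2_neg x : 0 < x < PI/2 -> p_Phi2 x (sin x) (cos x) < 0.
Proof. intros Hx. destruct (Rle_lt_dec x (313/200)).
 - apply mach_Phi2; lra.
 - pose proof PI_ub. destruct (region_facts x ltac:(lra)). apply crude_Phi2; lra. Qed.
Lemma Stx_pos x : 0 < x < PI/2 -> 0 < p_Stx x (sin x) (cos x).
Proof. intros Hx. pose proof PI_ub. apply mach_Stx; lra. Qed.

From Coquelicot Require Import Hierarchy Derive AutoDerive.
Open Scope R_scope.

Definition Af (x s c:R) := (s - x*c)^2*c.
Definition Bf (x s c:R) := x*(s - x*c)*s^2.
Definition Cf (x s c:R) := -(2*x^2*c - x*s - c*s^2).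
Definition Npf (q x s c:R) := (-1)*s + (-2)*s*c^2 + (1)*s^3 + (3)*x*c + (-2)*x^2*s + (1)*q*s^3 + (1)*q*x*s^2*c + (-2)*q*x^2*s*c^2 + (1)*q*x^2*s^3.
Definition Apf (x s c:R) := (-1)*s^3 + (4)*x*s^2*c + (-3)*x^2*s*c^2.
Definition Df (q x s c:R) := Npf q x s c * Af x s c - (q * Bf x s c - Cf x s c) * Apf x s c.
Definition Kf (q x s c:R) := (1)*s^3*c + (-5)*x*s^2*c^2 + (1)*x*s^4 + (7)*x^2*s*c^3 + (-4)*x^2*s^3*c + (-3)*x^3*c^4 + (7)*x^3*s^2*c^2 + (-4)*x^4*s*c^3.

Lemma Df_id q x s c : Df q x s c = (s - x*c)*((q-1)*s*(s-x*c)*p_PhiE x s c + c^2*p_Phi1 x s c) + (s^2+c^2-1)*Kf q x s c.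
Proof. unfold Df, Npf, Af, Apf, Bf, Cf, Kf, p_PhiE, p_Phi1. ring. Qed.

Lemma Df_id2 q x s c : (s - x*c)*((q-1)*s*(s-x*c)*p_PhiE x s c + c^2*p_Phi1 x s c) = (s - x*c)*((q-34/35)*s*(s-x*c)*p_PhiE x s c + p_Phi2 x s c).
Proof. unfold p_PhiE, p_Phi1, p_Phi2. field. Qed.

Lemma pyth x : sin x ^ 2 + cos x ^ 2 - 1 = 0.
Proof. pose proof (sin2_cos2 x). unfold Rsqr in H. lra. Qed.

Lemma Stx_pos' x : 0 < x < PI/2 -> 0 < sin x - x * cos x.
Proof. intros Hx. pose proof (Stx_pos x Hx). unfold p_Stx in H. simpl in H. lra. Qed.

Lemma A_pos x : 0 < x < PI/2 -> 0 < A x.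
Proof. intros Hx. pose proof (Stx_pos' x Hx). pose proof (cos_gt_0 x ltac:(lra) ltac:(lra)).
 unfold A. apply Rmult_lt_0_compat; auto. apply pow_lt; auto. Qed.

Lemma g1_derive q x : 0 < x < PI/2 -> is_derive (g1 q) x (Df q x (sin x) (cos x) / (A x)^2).
Proof. intros Hx. pose proof (A_pos x Hx) as HA. unfold g1, A, B, Defs.C in *. auto_derive.
 - intro Hc. assert (E: (sin x - x*cos x)^2*cos x = 0) by (rewrite <- Hc; simpl; ring). lra.
 - unfold Df, Npf, Af, Apf, Bf, Cf. field. pose proof (Stx_pos' x Hx). pose proof (cos_gt_0 x ltac:(lra) ltac:(lra)). split; lra. Qed.

Lemma Df_sign1 q x : 1 <= q -> 0 < x < PI/2 -> 0 < Df q x (sin x) (cos x).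
Proof. intros Hq Hx. rewrite Df_id. rewrite pyth. rewrite Rmult_0_l, Rplus_0_r.
 pose proof (Stx_pos' x Hx). pose proof (PhiE_pos x Hx). pose proof (Phi1_pos x Hx).
 pose proof (sin_gt_0 x ltac:(lra) ltac:(lra)). pose proof (cos_gt_0 x ltac:(lra) ltac:(lra)).
 apply Rmult_lt_0_compat; auto.
 assert (0 <= (q-1)*sin x*(sin x - x*cos x)*p_PhiE x (sin x) (cos x)).
 { repeat apply Rmult_le_pos; lra. }
 assert (0 < cos x ^2 * p_Phi1 x (sin x) (cos x)).
 { apply Rmult_lt_0_compat; auto. apply pow_lt; auto. }
 lra. Qed.

Lemma Df_sign2 q x : q <= 34/35 -> 0 < x < PI/2 -> Df q x (sin x) (cos x) < 0.
Proof. intros Hq Hx. rewrite Df_id. rewrite pyth. rewrite Rmult_0_l, Rplus_0_r. rewrite Df_id2.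
 pose proof (Stx_pos' x Hx). pose proof (PhiE_pos x Hx). pose proof (Phi2_neg x Hx).
 pose proof (sin_gt_0 x ltac:(lra) ltac:(lra)).
 assert (0 <= (34/35-q)*sin x*(sin x - x*cos x)*p_PhiE x (sin x) (cos x)).
 { repeat apply Rmult_le_pos; lra. }
 assert (((q - 34/35) * sin x * (sin x - x * cos x) * p_PhiE x (sin x) (cos x) + p_Phi2 x (sin x) (cos x)) < 0) by lra.
 nra. Qed.

Lemma g1_incr q : 1 <= q -> strictly_increasing_on_I (g1 q).
Proof. intros Hq x y Hx Hy Hxy. unfold in_I in *.
 destruct (MVT_cor2 (g1 q) (fun t => Df q t (sin t) (cos t) / (A t)^2) x y Hxy) as (z & Hz & Hzi).
 { intros t Ht. apply is_derive_Reals. apply g1_derive. lra. }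
 assert (Hzz: 0 < z < PI/2) by lra.
 pose proof (Df_sign1 q z Hq Hzz). pose proof (A_pos z Hzz).
 assert (0 < Df q z (sin z) (cos z) / A z ^ 2).
 { apply Rdiv_lt_0_compat; auto. apply pow_lt; auto. }
 nra. Qed.

Lemma g1_decr q : q <= 34/35 -> strictly_decreasing_on_I (g1 q).
Proof. intros Hq x y Hx Hy Hxy. unfold in_I in *.
 destruct (MVT_cor2 (g1 q) (fun t => Df q t (sin t) (cos t) / (A t)^2) x y Hxy) as (z & Hz & Hzi).
 { intros t Ht. apply is_derive_Reals. apply g1_derive. lra. }
 assert (Hzz: 0 < z < PI/2) by lra.
 pose proof (Df_sign2 q z Hq Hzz). pose proof (A_pos z Hzz).
 assert (Df q z (sin z) (cos z) / A z ^ 2 < 0).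
 { unfold Rdiv. assert (0 < / A z ^ 2). { apply Rinv_0_lt_compat. apply pow_lt; auto. } nra. }
 nra. Qed.

Lemma g1_shift q x : 0 < x < PI/2 ->
  g1 q x - (3*q - 8/5) = ((q-1)*p_Bnd2 x (sin x) (cos x) + p_Bnd1 x (sin x) (cos x)) / A x.
Proof. intros Hx. pose proof (A_pos x Hx). unfold g1, p_Bnd1, p_Bnd2. unfold A, B, Defs.C in *.
 pose proof (Stx_pos' x Hx). pose proof (cos_gt_0 x ltac:(lra) ltac:(lra)).
 field. repeat split; lra. Qed.

Lemma g1_shift2 q x : 0 < x < PI/2 ->
  g1 q x - (3*q - 8/5) = ((q-34/35)*p_Bnd2 x (sin x) (cos x) + p_Bnd3 x (sin x) (cos x)) / A x.
Proof. intros Hx. pose proof (A_pos x Hx). unfold g1, p_Bnd3, p_Bnd2. unfold A, B, Defs.C in *.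
 pose proof (Stx_pos' x Hx). pose proof (cos_gt_0 x ltac:(lra) ltac:(lra)).
 field. repeat split; lra. Qed.

Lemma lower_small q x : 1 <= q -> 0 < x <= 3/2 -> 3*q - 8/5 < g1 q x.
Proof. intros Hq Hx. pose proof PI2_3_2. assert (Hx': 0 < x < PI/2) by lra.
 pose proof (g1_shift q x Hx'). pose proof (A_pos x Hx').
 pose proof (mach_Bnd1 x ltac:(lra) ltac:(lra)). pose proof (mach_Bnd2 x ltac:(lra) ltac:(lra)).
 assert (0 < ((q-1)*p_Bnd2 x (sin x) (cos x) + p_Bnd1 x (sin x) (cos x)) / A x).
 { apply Rdiv_lt_0_compat; auto. nra. }
 lra. Qed.

Lemma upper_small q x : q <= 34/35 -> 0 < x <= 3/2 -> g1 q x < 3*q - 8/5.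
Proof. intros Hq Hx. pose proof PI2_3_2. assert (Hx': 0 < x < PI/2) by lra.
 pose proof (g1_shift2 q x Hx'). pose proof (A_pos x Hx').
 pose proof (mach_Bnd3 x ltac:(lra) ltac:(lra)). pose proof (mach_Bnd2 x ltac:(lra) ltac:(lra)).
 assert (((q-34/35)*p_Bnd2 x (sin x) (cos x) + p_Bnd3 x (sin x) (cos x)) / A x < 0).
 { unfold Rdiv. assert (0 < / A x) by (apply Rinv_0_lt_compat; auto).
   assert (Hn: (q-34/35)*p_Bnd2 x (sin x) (cos x) + p_Bnd3 x (sin x) (cos x) < 0) by nra.
   assert (0 < -((q-34/35)*p_Bnd2 x (sin x) (cos x) + p_Bnd3 x (sin x) (cos x)) * / A x) by (apply Rmult_lt_0_compat; lra).
   lra. }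
 lra. Qed.

Lemma lower_all q x : 1 <= q -> in_I x -> 3*q - 8/5 < g1 q x.
Proof. intros Hq Hx. unfold in_I in Hx. pose proof PI2_3_2.
 destruct (Rle_lt_dec x (3/2)).
 - apply lower_small; lra.
 - pose proof (lower_small q (3/2) Hq ltac:(lra)).
   pose proof (g1_incr q Hq (3/2) x ltac:(unfold in_I; lra) ltac:(unfold in_I; lra) ltac:(lra)). lra. Qed.

Lemma upper_all q x : q <= 34/35 -> in_I x -> g1 q x < 3*q - 8/5.
Proof. intros Hq Hx. unfold in_I in Hx. pose proof PI2_3_2.
 destruct (Rle_lt_dec x (3/2)).
 - apply upper_small; lra.
 - pose proof (upper_small q (3/2) Hq ltac:(lra)).
   pose proof (g1_decr q Hq (3/2) x ltac:(unfold in_I; lra) ltac:(unfold in_I; lra) ltac:(lra)). lra. Qed.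

Lemma g1_1_formula z : 0 < z < PI/2 ->
  g1 1 z = z^2 - 1 + z*cos z*(z^3*cos z + (2*z^2-3)*(sin z - z*cos z))/(sin z - z*cos z)^2.
Proof. intros Hz. pose proof (Stx_pos' z Hz). pose proof (cos_gt_0 z ltac:(lra) ltac:(lra)).
 assert (E: 1*B z - Defs.C z = (z^2-1)*A z + z*cos z^2*(z^3*cos z + (2*z^2-3)*(sin z - z*cos z)) + (sin z^2 + cos z^2 - 1)*(z*sin z - 2*z^2*cos z)) by (unfold A,B,Defs.C; ring).
 rewrite pyth in E. unfold g1. rewrite E. unfold A. field. split; lra. Qed.

Lemma g1_1_upper x : in_I x -> g1 1 x < PI^2/4 - 1.
Proof. intros Hx. unfold in_I in Hx. pose proof PI_ub. pose proof PI2_3_2.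
 destruct (Rlt_le_dec (g1 1 x) (PI^2/4-1)) as [Hlt|Hge]; auto. exfalso.
 set (y := (x + PI/2)/2).
 assert (Hy: 0 < y < PI/2) by (unfold y; lra).
 assert (Hxy: g1 1 x < g1 1 y) by (apply (g1_incr 1); unfold in_I, y in *; lra).
 set (d := g1 1 y - (PI^2/4-1)). assert (Hd: 0 < d) by (unfold d; lra).
 set (e := Rmin ((PI/2 - y)/2) (Rmin (d/200) (1/10))).
 assert (He1 : e <= (PI/2 - y)/2) by apply Rmin_l.
 assert (He2 : e <= d/200) by (eapply Rle_trans; [apply Rmin_r | apply Rmin_l]).
 assert (He3 : e <= 1/10) by (eapply Rle_trans; [apply Rmin_r | apply Rmin_r]).
 assert (He0 : 0 < e).
 { unfold e. apply Rmin_glb_lt. lra. apply Rmin_glb_lt; lra. }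
 set (z := PI/2 - e).
 assert (Hz : 0 < z < PI/2) by (unfold z; lra).
 assert (Hyz : y < z) by (unfold z; lra).
 assert (Hmono : g1 1 y < g1 1 z) by (apply (g1_incr 1); unfold in_I in *; lra).
 assert (Hc : cos z = sin e) by (unfold z; apply cos_shift).
 assert (Hs : sin z = cos e) by (unfold z; apply sin_shift).
 assert (Hc1 : sin e < e) by (apply sin_lt_x; lra).
 assert (Hc0 : 0 < sin e) by (apply sin_gt_0; lra).
 assert (Hs1 : 1 - e^2/2 <= cos e).
 { replace e with (2*(e/2)) at 2 by field. rewrite cos_2a_sin.
   pose proof (sin_lt_x (e/2) ltac:(lra)). pose proof (sin_gt_0 (e/2) ltac:(lra) ltac:(lra)). nra. }
 assert (Hs2 : cos e <= 1) by apply COS_bound.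
 rewrite (g1_1_formula z Hz) in Hmono. rewrite Hc, Hs in Hmono.
 set (c := sin e) in *. set (s := cos e) in *.
 assert (Hz2 : z^2 <= PI^2/4) by nra.
 assert (HD : 1/2 <= s - z*c) by nra.
 assert (HD1 : s - z*c <= 1) by nra.
 set (D := s - z*c) in *.
 assert (HN : z*c*(z^3*c + (2*z^2-3)*D) <= 15*c).
 { assert (z^3 <= 4) by nra. assert (z^3*c <= 4*c) by nra. assert ((2*z^2-3)*D <= 2*z^2*D) by nra.
   assert (2*z^2*D <= 5) by nra. assert (z*c <= 2*c) by nra.
   assert (HI: z^3*c + (2*z^2-3)*D <= 6) by lra.
   assert (Hzc: 0 <= z*c) by nra.
   pose proof (Rmult_le_compat_l (z*c) _ _ Hzc HI). lra. }
 assert (HiD : 0 < / D^2 <= 4).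
 { split. apply Rinv_0_lt_compat. nra. replace 4 with (/ (1/4)) by field. apply Rinv_le_contravar; nra. }
 assert (Hf : z*c*(z^3*c + (2*z^2-3)*D)/D^2 <= 60*c).
 { unfold Rdiv. set (N := z*c*(z^3*c + (2*z^2-3)*D)) in *. nra. }
 unfold d in He2. lra. Qed.

Theorem lemma6 (q : R) :
  (1 <= q ->
     strictly_increasing_on_I (g1 q) /\
     (1 < q -> forall x, in_I x -> 3 * q - 8 / 5 < g1 q x) /\
     (q = 1 -> forall x, in_I x -> 3 * q - 8 / 5 < g1 q x < PI ^ 2 / 4 - 1)) /\
  (q <= 34 / 35 ->
     strictly_decreasing_on_I (g1 q) /\
     (forall x, in_I x -> g1 q x < 3 * q - 8 / 5)).
Proof. split.
 - intros Hq. split; [apply g1_incr; auto|]. split.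
   + intros Hq1 x Hx. apply lower_all; auto.
   + intros Hq1 x Hx. split. apply lower_all; auto. subst q. apply g1_1_upper; auto.
 - intros Hq. split; [apply g1_decr; auto|]. intros x Hx. apply upper_all; auto.
Qed.
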